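(* Let $T\in\mathbf B_m(\Omega)$ with $0\in\Omega$, and put $\mathcal H_n=\ker T^n$, $T_n=T|_{\mathcal H_n}$ (a nilpotent operator on a finite-dimensional space). If $S\in\mathcal C_T(\Omega)$, then $\phi_S$ is analytic on $\Omega$ and $S|_{\mathcal H_n}=\phi_S(T_n)$ for all $n\ge1$.
   Context: $\mathcal H$ is a complex separable Hilbert space. For a connected open $\Omega\subset\mathbb C$ and integer $m\ge1$, $\mathbf B_m(\Omega)$ is the set of $T\in\mathcal B(\mathcal H)$ with: $\Omega\subset\sigma(T)$; $\operatorname{Ran}(T-w)=\mathcal H$ for $w\in\Omega$; $\bigvee_{w\in\Omega}\ker(T-w)=\mathcal H$; $\dim\ker(T-w)=m$ for $w\in\Omega$. $\mathcal N_\lambda=\ker(T-\lambda)$. For $S$ in the commutant $\{T\}'$, $S\mathcal N_\lambda\subset\mathcal N_\lambda$ and $\Phi_S(\lambda)=S|_{\mathcal N_\lambda}$. $\mathcal C_T(\Omega)$ is the set of $S\in\{T\}'$ for which there is a scalar function $\phi_S$ on $\Omega$ with $\Phi_S(\lambda)=\phi_S(\lambda)I_{\mathcal N_\lambda}$ for all $\lambda\in\Omega$. $\phi_S(T_n)$ is defined by the holomorphic functional calculus (equivalently, by the Taylor polynomial of $\phi_S$ at $0$ of degree $n-1$). *)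

(* Defs.v *)
From Stdlib Require Import Reals.
Open Scope R_scope.

Definition CC : Type := (R * R)%type.
Definition Cre (z : CC) : R := fst z.
Definition Cim (z : CC) : R := snd z.
Definition C0 : CC := (0, 0).
Definition C1 : CC := (1, 0).
Definition Cadd (z w : CC) : CC := (fst z + fst w, snd z + snd w).
Definition Copp (z : CC) : CC := (- fst z, - snd z).
Definition Csub (z w : CC) : CC := Cadd z (Copp w).
Definition Cmul (z w : CC) : CC :=
  (fst z * fst w - snd z * snd w, fst z * snd w + snd z * fst w).
Definition Cconj (z : CC) : CC := (fst z, - snd z).
Definition Cnorm (z : CC) : R := sqrt (fst z * fst z + snd z * snd z).
Fixpoint Cpow (z : CC) (n : nat) : CC :=
  match n with O => C1 | S k => Cmul (Cpow z k) z end.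

Fixpoint Cpsum (a : nat -> CC) (z0 z : CC) (N : nat) : CC :=
  match N with
  | O => C0
  | S k => Cadd (Cpsum a z0 z k) (Cmul (a k) (Cpow (Csub z z0) k))
  end.

Definition power_series_converges_to (a : nat -> CC) (z0 z l : CC) : Prop :=
  forall eps, 0 < eps -> exists N0 : nat, forall N : nat, (N0 <= N)%nat ->
    Cnorm (Csub (Cpsum a z0 z N) l) < eps.

Definition Copen (U : CC -> Prop) : Prop :=
  forall z, U z -> exists r, 0 < r /\ forall w, Cnorm (Csub w z) < r -> U w.

Definition Cconnected (Om : CC -> Prop) : Prop :=
  ~ (exists U V : CC -> Prop, Copen U /\ Copen V /\
       (forall z, Om z -> U z \/ V z) /\
       (exists z, Om z /\ U z) /\ (exists z, Om z /\ V z) /\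
       (forall z, Om z -> U z -> V z -> False)).

Definition analytic_on (Om : CC -> Prop) (phi : CC -> CC) : Prop :=
  forall z0, Om z0 -> exists r, 0 < r /\ exists a : nat -> CC,
    forall z, Cnorm (Csub z z0) < r -> power_series_converges_to a z0 z (phi z).

Record HilbertSpace := {
  hcarrier :> Type;
  vzero : hcarrier;
  vadd : hcarrier -> hcarrier -> hcarrier;
  vopp : hcarrier -> hcarrier;
  vscale : CC -> hcarrier -> hcarrier;
  inner : hcarrier -> hcarrier -> CC;
  vadd_assoc : forall x y z, vadd x (vadd y z) = vadd (vadd x y) z;
  vadd_comm : forall x y, vadd x y = vadd y x;
  vadd_0 : forall x, vadd x vzero = x;
  vadd_opp : forall x, vadd x (vopp x) = vzero;
  vscale_1 : forall x, vscale C1 x = x;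
  vscale_assoc : forall a b x, vscale a (vscale b x) = vscale (Cmul a b) x;
  vscale_distr_v : forall a x y, vscale a (vadd x y) = vadd (vscale a x) (vscale a y);
  vscale_distr_c : forall a b x, vscale (Cadd a b) x = vadd (vscale a x) (vscale b x);
  inner_add_l : forall x y z, inner (vadd x y) z = Cadd (inner x z) (inner y z);
  inner_scale_l : forall a x y, inner (vscale a x) y = Cmul a (inner x y);
  inner_conj : forall x y, inner y x = Cconj (inner x y);
  inner_pos : forall x, 0 <= Cre (inner x x);
  inner_def : forall x, inner x x = C0 -> x = vzero;
  complete : forall u : nat -> hcarrier,
    (forall eps, 0 < eps -> exists N, forall p q, (N <= p)%nat -> (N <= q)%nat ->
       sqrt (Cre (inner (vadd (u p) (vopp (u q))) (vadd (u p) (vopp (u q))))) < eps) ->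
    exists l, forall eps, 0 < eps -> exists N, forall p, (N <= p)%nat ->
       sqrt (Cre (inner (vadd (u p) (vopp l)) (vadd (u p) (vopp l)))) < eps;
  separable : exists d : nat -> hcarrier, forall x eps, 0 < eps -> exists k,
       sqrt (Cre (inner (vadd x (vopp (d k))) (vadd x (vopp (d k))))) < eps
}.

Arguments vzero {h}.
Arguments vadd {h}.
Arguments vopp {h}.
Arguments vscale {h}.
Arguments inner {h}.

Definition vsub {H : HilbertSpace} (x y : H) : H := vadd x (vopp y).
Definition hnorm {H : HilbertSpace} (x : H) : R := sqrt (Cre (inner x x)).

Definition bounded_op {H : HilbertSpace} (A : H -> H) : Prop :=
  (forall x y, A (vadd x y) = vadd (A x) (A y)) /\
  (forall a x, A (vscale a x) = vscale a (A x)) /\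
  (exists M, forall x, hnorm (A x) <= M * hnorm x).

Definition op_shift {H : HilbertSpace} (A : H -> H) (w : CC) : H -> H :=
  fun x => vsub (A x) (vscale w x).

Definition in_spectrum {H : HilbertSpace} (A : H -> H) (w : CC) : Prop :=
  ~ (exists B : H -> H, bounded_op B /\
       (forall x, B (op_shift A w x) = x) /\ (forall x, op_shift A w (B x) = x)).

Fixpoint vsum {H : HilbertSpace} (n : nat) (f : nat -> H) : H :=
  match n with O => vzero | S k => vadd (vsum k f) (f k) end.

Inductive in_span {H : HilbertSpace} (P : H -> Prop) : H -> Prop :=
  | span_zero : in_span P vzero
  | span_step : forall (a : CC) (y z : H), P y -> in_span P z ->
                  in_span P (vadd (vscale a y) z).

Definition closed_span_is_whole {H : HilbertSpace} (P : H -> Prop) : Prop :=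
  forall x : H, forall eps, 0 < eps -> exists y, in_span P y /\ hnorm (vsub x y) < eps.

Definition eigenspace {H : HilbertSpace} (A : H -> H) (w : CC) (x : H) : Prop :=
  A x = vscale w x.

Definition kernel_dim {H : HilbertSpace} (A : H -> H) (w : CC) (m : nat) : Prop :=
  exists e : nat -> H,
    (forall i, (i < m)%nat -> eigenspace A w (e i)) /\
    (forall c : nat -> CC, vsum m (fun i => vscale (c i) (e i)) = vzero ->
        forall i, (i < m)%nat -> c i = C0) /\
    (forall x, eigenspace A w x -> exists c : nat -> CC,
        x = vsum m (fun i => vscale (c i) (e i))).

Definition CowenDouglas {H : HilbertSpace} (m : nat) (Om : CC -> Prop) (T : H -> H) : Prop :=
  bounded_op T /\
  (forall w, Om w -> in_spectrum T w) /\
  (forall w, Om w -> forall y : H, exists x, op_shift T w x = y) /\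
  closed_span_is_whole (fun x => exists w, Om w /\ eigenspace T w x) /\
  (forall w, Om w -> kernel_dim T w m).

Definition in_commutant {H : HilbertSpace} (T S : H -> H) : Prop :=
  bounded_op S /\ forall x, S (T x) = T (S x).

(** S in C_T(Omega) with scalar function phi: Phi_S(lambda) = phi(lambda) I *)
Definition scalar_on_eigenspaces {H : HilbertSpace} (Om : CC -> Prop) (T S : H -> H)
    (phi : CC -> CC) : Prop :=
  forall lam, Om lam -> forall x, eigenspace T lam x -> S x = vscale (phi lam) x.

(* Main.v *)
Require Import Defs.
From Stdlib Require Import Reals.
Open Scope R_scope.
From Stdlib Require Import Lra Lia Psatz Classical ClassicalEpsilon.
Require Coquelicot.Complex.
Require Import Defs.

Ltac cdes := repeat match goal with z : CC |- _ => destruct z end.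
Ltac ceq := cdes; unfold Csub, Cadd, Copp, Cmul, C0, C1, Cconj; simpl; f_equal; ring.

Lemma CC_ring_theory : ring_theory C0 C1 Cadd Cmul Csub Copp (@eq CC).
Proof. split; intros; ceq. Qed.
Add Ring CC_ring : CC_ring_theory.

Lemma Cnorm_Cmod z : Cnorm z = Complex.Cmod z.
Proof. unfold Cnorm, Complex.Cmod. f_equal. simpl. ring. Qed.

Lemma Cnorm_ge0 z : 0 <= Cnorm z.
Proof. apply sqrt_pos. Qed.

Lemma Cnorm_mul z w : Cnorm (Cmul z w) = Cnorm z * Cnorm w.
Proof. rewrite !Cnorm_Cmod. apply Complex.Cmod_mult. Qed.

Lemma Cnorm_triangle z w : Cnorm (Cadd z w) <= Cnorm z + Cnorm w.
Proof. rewrite !Cnorm_Cmod. apply Complex.Cmod_triangle. Qed.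

Lemma Cnorm_opp z : Cnorm (Copp z) = Cnorm z.
Proof. unfold Cnorm, Copp; simpl. f_equal. ring. Qed.

Lemma Cnorm_sub_sym z w : Cnorm (Csub z w) = Cnorm (Csub w z).
Proof. replace (Csub z w) with (Copp (Csub w z)) by ring. apply Cnorm_opp. Qed.

Lemma Cnorm_C0 : Cnorm C0 = 0.
Proof. unfold Cnorm, C0; simpl. rewrite Rmult_0_l, Rplus_0_l. apply sqrt_0. Qed.

Lemma Cnorm_eq0 z : Cnorm z = 0 -> z = C0.
Proof. rewrite Cnorm_Cmod. intros Hz. apply Complex.Cmod_eq_0 in Hz. exact Hz. Qed.

Lemma Cnorm_real r : Cnorm (r, 0) = Rabs r.
Proof. unfold Cnorm; simpl. rewrite Rmult_0_l, Rplus_0_r. apply sqrt_Rsqr_abs. Qed.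

Lemma Cnorm_triangle_sub z w u : Cnorm (Csub z w) <= Cnorm (Csub z u) + Cnorm (Csub u w).
Proof. replace (Csub z w) with (Cadd (Csub z u) (Csub u w)) by ring. apply Cnorm_triangle. Qed.

Lemma Cnorm_sub_le z w : Cnorm z <= Cnorm (Csub z w) + Cnorm w.
Proof. replace z with (Cadd (Csub z w) w) at 1 by ring. apply Cnorm_triangle. Qed.

Lemma Cpow_S z k : Cpow z (S k) = Cmul (Cpow z k) z.
Proof. reflexivity. Qed.

Lemma Cnorm_pow z k : Cnorm (Cpow z k) = Cnorm z ^ k.
Proof.
  induction k; simpl.
  - unfold Cnorm, C1; simpl. replace (1*1+0*0) with 1 by ring. apply sqrt_1.
  - rewrite Cnorm_mul, IHk. ring.
Qed.

Lemma Cpow_add z j k : Cpow z (j + k) = Cmul (Cpow z j) (Cpow z k).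
Proof. induction k; simpl. rewrite Nat.add_0_r; ring. rewrite Nat.add_succ_r; simpl; rewrite IHk; ring. Qed.

Lemma Csub_C0 z : Csub z C0 = z.
Proof. ring. Qed.

Definition Cinv (z : CC) : CC := Complex.Cinv z.

Lemma Cinv_r z : z <> C0 -> Cmul z (Cinv z) = C1.
Proof. intros Hz. exact (Complex.Cinv_r z Hz). Qed.

Lemma Cnorm_pos z : z <> C0 -> 0 < Cnorm z.
Proof. intros Hz. destruct (Cnorm_ge0 z) as [h|h]; auto. symmetry in h. apply Cnorm_eq0 in h. contradiction. Qed.


Lemma Cmul_eq0 z w : Cmul z w = C0 -> z = C0 \/ w = C0.
Proof.
  intros h. assert (Cnorm z * Cnorm w = 0) as h2 by (rewrite <- Cnorm_mul, h; apply Cnorm_C0).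
  apply Rmult_integral in h2. destruct h2 as [h2|h2]; [left|right]; apply Cnorm_eq0; auto.
Qed.

Lemma Cnorm_scale_real r z : Cnorm (Cmul (r,0) z) = Rabs r * Cnorm z.
Proof. rewrite Cnorm_mul, Cnorm_real. auto. Qed.

Lemma Cnorm_ineq_sub z w : Cnorm z - Cnorm w <= Cnorm (Csub z w).
Proof. pose proof (Cnorm_sub_le z w). lra. Qed.

Lemma Cnorm_fst z : Rabs (fst z) <= Cnorm z.
Proof.
  destruct z as [x y]; unfold Cnorm; simpl. rewrite <- sqrt_Rsqr_abs. apply sqrt_le_1_alt.
  unfold Rsqr. nra.
Qed.
Lemma Cnorm_snd z : Rabs (snd z) <= Cnorm z.
Proof.
  destruct z as [x y]; unfold Cnorm; simpl. rewrite <- sqrt_Rsqr_abs. apply sqrt_le_1_alt.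
  unfold Rsqr. nra.
Qed.
Lemma Cnorm_le_comp z : Cnorm z <= Rabs (fst z) + Rabs (snd z).
Proof.
  destruct z as [x y]; unfold Cnorm; simpl.
  rewrite <- (sqrt_Rsqr (Rabs x + Rabs y)) by (pose proof (Rabs_pos x); pose proof (Rabs_pos y); lra).
  apply sqrt_le_1_alt. unfold Rsqr.
  pose proof (Rabs_pos x); pose proof (Rabs_pos y).
  assert (Rabs x * Rabs x = x*x) by (rewrite <- Rabs_mult; apply Rabs_right; nra).
  assert (Rabs y * Rabs y = y*y) by (rewrite <- Rabs_mult; apply Rabs_right; nra). nra.
Qed.


Lemma vadd_0_l {H : HilbertSpace} (x : H) : vadd vzero x = x.
Proof. rewrite vadd_comm. apply vadd_0. Qed.

Lemma vadd_cancel_l {H : HilbertSpace} (a x y : H) : vadd a x = vadd a y -> x = y.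
Proof.
  intros h. assert (vadd (vopp a) (vadd a x) = vadd (vopp a) (vadd a y)) as h2 by (rewrite h; auto).
  rewrite !vadd_assoc in h2. rewrite (vadd_comm _ (vopp a) a), vadd_opp, !vadd_0_l in h2. exact h2.
Qed.

Lemma vscale_C0 {H : HilbertSpace} (x : H) : vscale C0 x = vzero.
Proof.
  apply (vadd_cancel_l (vscale C0 x)). rewrite vadd_0, <- vscale_distr_c.
  f_equal. ring.
Qed.

Lemma vopp_scale {H : HilbertSpace} (x : H) : vopp x = vscale (Copp C1) x.
Proof.
  apply (vadd_cancel_l x). rewrite vadd_opp.
  rewrite <- (vscale_1 H x) at 1. rewrite <- vscale_distr_c.
  replace (Cadd C1 (Copp C1)) with C0 by ring. symmetry; apply vscale_C0.
Qed.

Lemma vscale_vzero {H : HilbertSpace} (a : CC) : vscale a (@vzero H) = vzero.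
Proof. rewrite <- (vscale_C0 vzero), vscale_assoc. f_equal. ring. Qed.

Lemma vopp_vzero {H : HilbertSpace} : vopp (@vzero H) = vzero.
Proof. rewrite vopp_scale. apply vscale_vzero. Qed.

Lemma vopp_add {H : HilbertSpace} (x y : H) : vopp (vadd x y) = vadd (vopp x) (vopp y).
Proof. rewrite !vopp_scale. apply vscale_distr_v. Qed.

Lemma vopp_opp {H : HilbertSpace} (x : H) : vopp (vopp x) = x.
Proof. rewrite !vopp_scale, vscale_assoc. rewrite <- (vscale_1 H x) at 2. f_equal. ring. Qed.

Lemma vsub_diag {H : HilbertSpace} (x : H) : vsub x x = vzero.
Proof. apply vadd_opp. Qed.

Lemma vsub_eq0 {H : HilbertSpace} (x y : H) : vsub x y = vzero -> x = y.
Proof.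
  unfold vsub. intros h. assert (vadd (vadd x (vopp y)) y = vadd vzero y) as h2 by (rewrite h; auto).
  rewrite <- vadd_assoc, (vadd_comm _ (vopp y) y), vadd_opp, vadd_0, vadd_0_l in h2. exact h2.
Qed.

Lemma vscale_add_scale {H : HilbertSpace} a b (x : H) : vadd (vscale a x) (vscale b x) = vscale (Cadd a b) x.
Proof. symmetry. apply vscale_distr_c. Qed.

Lemma inner_0_l {H : HilbertSpace} (y : H) : inner vzero y = C0.
Proof. rewrite <- (vscale_C0 vzero), inner_scale_l. ring. Qed.

Lemma inner_0_r {H : HilbertSpace} (y : H) : inner y vzero = C0.
Proof. rewrite inner_conj, inner_0_l. ceq. Qed.

Lemma inner_add_r {H : HilbertSpace} (x y z : H) : inner x (vadd y z) = Cadd (inner x y) (inner x z).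
Proof.
  rewrite inner_conj, inner_add_l, (inner_conj _ y x), (inner_conj _ z x).
  generalize (inner x y) (inner x z). intros; ceq.
Qed.

Lemma inner_scale_r {H : HilbertSpace} a (x y : H) : inner x (vscale a y) = Cmul (Cconj a) (inner x y).
Proof.
  rewrite inner_conj, inner_scale_l, (inner_conj _ y x). generalize (inner x y). intros; ceq.
Qed.

Lemma inner_opp_l {H : HilbertSpace} (x y : H) : inner (vopp x) y = Copp (inner x y).
Proof. rewrite vopp_scale, inner_scale_l. ring. Qed.

Lemma inner_sub_l {H : HilbertSpace} (x y z : H) : inner (vsub x y) z = Csub (inner x z) (inner y z).
Proof. unfold vsub. rewrite inner_add_l, inner_opp_l. ring. Qed.

Lemma inner_self_im {H : HilbertSpace} (x : H) : snd (inner x x) = 0.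
Proof.
  pose proof (inner_conj _ x x) as h. destruct (inner x x) as [a b]. unfold Cconj in h; simpl in *.
  injection h. lra.
Qed.

Lemma inner_self_eq {H : HilbertSpace} (x : H) : inner x x = (Cre (inner x x), 0).
Proof. pose proof (inner_self_im x). destruct (inner x x); simpl in *; subst; auto. Qed.

Lemma hnorm_ge0 {H : HilbertSpace} (x : H) : 0 <= hnorm x.
Proof. apply sqrt_pos. Qed.

Lemma hnorm_sq {H : HilbertSpace} (x : H) : hnorm x * hnorm x = Cre (inner x x).
Proof. unfold hnorm. apply sqrt_sqrt. apply inner_pos. Qed.

Lemma hnorm_vzero {H : HilbertSpace} : hnorm (@vzero H) = 0.
Proof. unfold hnorm. rewrite inner_0_l. unfold Cre, C0; simpl. apply sqrt_0. Qed.

Lemma hnorm_eq0 {H : HilbertSpace} (x : H) : hnorm x = 0 -> x = vzero.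
Proof.
  intros h. apply inner_def. rewrite inner_self_eq.
  pose proof (hnorm_sq x) as h2. rewrite h in h2. rewrite <- h2. unfold C0. f_equal. ring.
Qed.

Lemma hnorm_scale {H : HilbertSpace} a (x : H) : hnorm (vscale a x) = Cnorm a * hnorm x.
Proof.
  unfold hnorm. rewrite inner_scale_l, inner_scale_r, inner_self_eq.
  unfold Cnorm. rewrite <- sqrt_mult.
  - f_equal. destruct a as [p q]. unfold Cmul, Cconj, Cre; simpl. ring.
  - destruct a; simpl; nra.
  - apply inner_pos.
Qed.

Lemma hnorm_opp {H : HilbertSpace} (x : H) : hnorm (vopp x) = hnorm x.
Proof.
  rewrite vopp_scale, hnorm_scale. replace (Cnorm (Copp C1)) with 1. ring.
  rewrite Cnorm_opp. unfold Cnorm, C1; simpl. replace (1*1+0*0) with 1 by ring. now rewrite sqrt_1.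
Qed.

Lemma inner_expand {H : HilbertSpace} (x y : H) s :
  inner (vadd x (vscale s y)) (vadd x (vscale s y)) =
  Cadd (Cadd (inner x x) (Cmul (Cconj s) (inner x y)))
       (Cadd (Cmul s (inner y x)) (Cmul (Cmul s (Cconj s)) (inner y y))).
Proof.
  rewrite !inner_add_l, !inner_add_r, !inner_scale_l, !inner_scale_r. ring.
Qed.

Lemma cauchy_schwarz {H : HilbertSpace} (x y : H) : Cnorm (inner x y) <= hnorm x * hnorm y.
Proof.
  destruct (classic (y = vzero)) as [hy|hy].
  - subst. rewrite inner_0_r, hnorm_vzero, Cnorm_C0. lra.
  - assert (hP : 0 < Cre (inner y y)).
    { destruct (inner_pos _ y) as [h|h]; auto. exfalso. apply hy. apply inner_def.
      rewrite inner_self_eq, <- h. reflexivity. }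
    set (P := Cre (inner y y)) in *.
    destruct (inner x y) as [u v] eqn:Exy.
    assert (Eyx : inner y x = (u, -v)) by (rewrite inner_conj, Exy; reflexivity).
    pose proof (inner_pos _ (vadd x (vscale (-u/P, -v/P) y))) as hpos.
    rewrite inner_expand, Exy, Eyx, (inner_self_eq y), (inner_self_eq x) in hpos.
    fold P in hpos. set (A := Cre (inner x x)) in *.
    unfold Cre, Cadd, Cmul, Cconj in hpos; simpl in hpos.
    assert (h1 : u*u + v*v <= A * P).
    { match type of hpos with 0 <= ?e =>
        assert (E : P * e = A*P - (u*u+v*v)) by (field; lra) end.
      match type of hpos with 0 <= ?e => assert (0 <= P*e) by (apply Rmult_le_pos; lra) end.
      lra. }
    unfold Cnorm, hnorm; simpl. fold P A. rewrite <- sqrt_mult by (try apply inner_pos; lra).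
    apply sqrt_le_1_alt. exact h1.
Qed.

Lemma hnorm_triangle {H : HilbertSpace} (x y : H) : hnorm (vadd x y) <= hnorm x + hnorm y.
Proof.
  pose proof (inner_expand x y C1) as E. rewrite vscale_1 in E.
  pose proof (cauchy_schwarz x y) as cs. pose proof (Cnorm_fst (inner x y)) as cf.
  pose proof (hnorm_sq x) as sx. pose proof (hnorm_sq y) as sy. pose proof (hnorm_sq (vadd x y)) as sxy.
  rewrite E, (inner_self_eq x), (inner_self_eq y), <- sx, <- sy, (inner_conj _ x y) in sxy.
  destruct (inner x y) as [u v]. unfold Cre, Cadd, Cmul, Cconj, C1 in sxy; simpl in sxy, cf.
  pose proof (hnorm_ge0 x); pose proof (hnorm_ge0 y); pose proof (hnorm_ge0 (vadd x y)).
  apply Rsqr_incr_0_var; unfold Rsqr; [|nra].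
  rewrite sxy. pose proof (Rle_abs u). nra.
Qed.


Lemma vsub_opp {H : HilbertSpace} (x y : H) : vsub y x = vopp (vsub x y).
Proof. unfold vsub. rewrite vopp_add, vopp_opp, vadd_comm. reflexivity. Qed.

Lemma hnorm_sub_sym {H : HilbertSpace} (x y : H) : hnorm (vsub x y) = hnorm (vsub y x).
Proof. rewrite (vsub_opp x y), hnorm_opp. reflexivity. Qed.

Lemma vsub_split {H : HilbertSpace} (x y z : H) : vsub x z = vadd (vsub x y) (vsub y z).
Proof.
  unfold vsub. rewrite <- vadd_assoc, (vadd_assoc _ (vopp y) y), (vadd_comm _ (vopp y) y), vadd_opp, vadd_0_l.
  reflexivity.
Qed.

Lemma hnorm_sub_tri {H : HilbertSpace} (x y z : H) : hnorm (vsub x z) <= hnorm (vsub x y) + hnorm (vsub y z).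
Proof. rewrite (vsub_split x y z). apply hnorm_triangle. Qed.

Lemma half_pow_small eps : 0 < eps -> exists N, forall n, (N <= n)%nat -> (1/2)^n < eps.
Proof.
  intros he. destruct (cv_pow_half 1 eps he) as [N hN]. exists N. intros n hn.
  specialize (hN n hn). unfold Rdist in hN. rewrite Rminus_0_r in hN.
  rewrite Rdiv_1_l, pow_inv. rewrite Rdiv_1_l in hN. rewrite Rabs_right in hN. auto.
  left. apply Rinv_0_lt_compat, pow_lt. lra.
Qed.

Lemma half_pow_pos n : 0 < (1/2)^n.
Proof. apply pow_lt. lra. Qed.

Lemma pow_le_decr h n m : 0 <= h <= 1 -> (n <= m)%nat -> h^m <= h^n.
Proof.
  intros hh hnm. induction hnm. lra. simpl. pose proof (pow_le h m). 
  apply Rle_trans with (h^m); auto. nra.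
Qed.

Lemma half_pow_le n m : (n <= m)%nat -> (1/2)^m <= (1/2)^n.
Proof. intros h. apply pow_le_decr; auto; lra. Qed.

Fixpoint rsum (n : nat) (f : nat -> R) : R :=
  match n with O => 0 | S k => rsum k f + f k end.

Lemma rsum_le n f g : (forall k, (k < n)%nat -> f k <= g k) -> rsum n f <= rsum n g.
Proof. induction n; simpl; intros h. lra. pose proof (h n (Nat.lt_succ_diag_r n)). 
  assert (rsum n f <= rsum n g) by (apply IHn; intros; apply h; lia). lra. Qed.

Lemma rsum_ge0 n f : (forall k, 0 <= f k) -> 0 <= rsum n f.
Proof. induction n; simpl; intros h. lra. pose proof (h n). pose proof (IHn h). lra. Qed.

Lemma rsum_scal n c f : rsum n (fun k => c * f k) = c * rsum n f.
Proof. induction n; simpl. ring. rewrite IHn. ring. Qed.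

Lemma rsum_geom n h : h <> 1 -> rsum n (fun k => h ^ k) = (1 - h ^ n) / (1 - h).
Proof.
  intros h1. induction n; simpl. field. intro; apply h1; lra.
  rewrite IHn. field. intro; apply h1; lra.
Qed.

Lemma rsum_geom_le n h : 0 <= h < 1 -> rsum n (fun k => h ^ k) <= 1 / (1 - h).
Proof.
  intros hh. rewrite rsum_geom by lra. unfold Rdiv. apply Rmult_le_compat_r.
  left; apply Rinv_0_lt_compat; lra. pose proof (pow_le h n). lra.
Qed.

Definition hconv {H : HilbertSpace} (u : nat -> H) (l : H) : Prop :=
  forall eps, 0 < eps -> exists N, forall n, (N <= n)%nat -> hnorm (vsub (u n) l) < eps.

Lemma hconv_unique {H : HilbertSpace} (u : nat -> H) l l' : hconv u l -> hconv u l' -> l = l'.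
Proof.
  intros h1 h2. apply vsub_eq0. apply hnorm_eq0.
  destruct (Req_dec (hnorm (vsub l l')) 0) as [e|ne]; auto. exfalso.
  pose proof (hnorm_ge0 (vsub l l')).
  set (d := hnorm (vsub l l')) in *.
  destruct (h1 (d/2)) as [N1 hN1]. lra. destruct (h2 (d/2)) as [N2 hN2]. lra.
  specialize (hN1 (N1+N2)%nat ltac:(lia)). specialize (hN2 (N1+N2)%nat ltac:(lia)).
  pose proof (hnorm_sub_tri l (u (N1+N2)%nat) l') as ht. rewrite (hnorm_sub_sym l (u _)) in ht. fold d in ht. lra.
Qed.

Definition is_linear {H : HilbertSpace} (A : H -> H) : Prop :=
  (forall x y, A (vadd x y) = vadd (A x) (A y)) /\ (forall a x, A (vscale a x) = vscale a (A x)).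

Lemma lin_zero {H : HilbertSpace} (A : H -> H) : is_linear A -> A vzero = vzero.
Proof. intros [_ h]. rewrite <- (vscale_C0 vzero), h, !vscale_C0. reflexivity. Qed.

Lemma lin_opp {H : HilbertSpace} (A : H -> H) x : is_linear A -> A (vopp x) = vopp (A x).
Proof. intros [_ h]. rewrite !vopp_scale, h. reflexivity. Qed.

Lemma lin_sub {H : HilbertSpace} (A : H -> H) x y : is_linear A -> A (vsub x y) = vsub (A x) (A y).
Proof. intros hl. unfold vsub. rewrite (proj1 hl), lin_opp; auto. Qed.

Lemma lin_vsum {H : HilbertSpace} (A : H -> H) n f : is_linear A -> A (vsum n f) = vsum n (fun k => A (f k)).
Proof. intros hl. induction n; simpl. apply lin_zero; auto. rewrite (proj1 hl), IHn. reflexivity. Qed.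

Lemma bounded_linear {H : HilbertSpace} (A : H -> H) : bounded_op A -> is_linear A.
Proof. intros [h1 [h2 _]]. split; auto. Qed.

Lemma bounded_pos {H : HilbertSpace} (A : H -> H) : bounded_op A ->
  exists M, 0 < M /\ forall x, hnorm (A x) <= M * hnorm x.
Proof.
  intros [_ [_ [M hM]]]. exists (Rabs M + 1). split. pose proof (Rabs_pos M); lra.
  intros x. specialize (hM x). pose proof (hnorm_ge0 x). pose proof (Rle_abs M).
  apply Rle_trans with (M * hnorm x); auto. nra.
Qed.

Lemma hconv_op {H : HilbertSpace} (A : H -> H) u l : bounded_op A -> hconv u l -> hconv (fun n => A (u n)) (A l).
Proof.
  intros hA hc. destruct (bounded_pos A hA) as [M [hM hb]].
  intros eps he. destruct (hc (eps / M)) as [N hN]. apply Rdiv_lt_0_compat; lra.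
  exists N. intros n hn. rewrite <- lin_sub by (apply bounded_linear; auto).
  apply Rle_lt_trans with (M * hnorm (vsub (u n) l)); auto.
  specialize (hN n hn). apply Rmult_lt_compat_l with (r := M) in hN; auto.
  replace (M * (eps / M)) with eps in hN by (field; lra). lra.
Qed.

Lemma hconv_ext {H : HilbertSpace} (u v : nat -> H) l : (forall n, u n = v n) -> hconv u l -> hconv v l.
Proof. intros e h eps he. destruct (h eps he) as [N hN]. exists N. intros n hn. rewrite <- e. auto. Qed.

Lemma hconv_shift {H : HilbertSpace} (u : nat -> H) l : hconv u l -> hconv (fun n => u (S n)) l.
Proof. intros h eps he. destruct (h eps he) as [N hN]. exists N. intros n hn. apply hN. lia. Qed.

Lemma vscale_sub {H : HilbertSpace} a (x y : H) : vscale a (vsub x y) = vsub (vscale a x) (vscale a y).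
Proof. unfold vsub. rewrite vscale_distr_v, !vopp_scale, !vscale_assoc. f_equal. f_equal. ring. Qed.

Lemma hconv_scale {H : HilbertSpace} (u : nat -> H) l a : hconv u l -> hconv (fun n => vscale a (u n)) (vscale a l).
Proof.
  intros hc eps he. destruct (hc (eps / (Cnorm a + 1))) as [N hN].
  apply Rdiv_lt_0_compat; pose proof (Cnorm_ge0 a); lra.
  exists N. intros n hn. rewrite <- vscale_sub, hnorm_scale. specialize (hN n hn).
  pose proof (Cnorm_ge0 a). pose proof (hnorm_ge0 (vsub (u n) l)).
  apply Rle_lt_trans with ((Cnorm a + 1) * hnorm (vsub (u n) l)). nra.
  apply Rmult_lt_compat_l with (r := Cnorm a + 1) in hN. 2: lra.
  replace ((Cnorm a + 1) * (eps / (Cnorm a + 1))) with eps in hN by (field; lra). lra.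
Qed.

Definition cconv (s : nat -> CC) (l : CC) : Prop :=
  forall eps, 0 < eps -> exists N, forall n, (N <= n)%nat -> Cnorm (Csub (s n) l) < eps.

Lemma cconv_unique s l l' : cconv s l -> cconv s l' -> l = l'.
Proof.
  intros h1 h2. assert (Csub l l' = C0).
  { apply Cnorm_eq0. destruct (Req_dec (Cnorm (Csub l l')) 0) as [e|ne]; auto. exfalso.
    pose proof (Cnorm_ge0 (Csub l l')). set (d := Cnorm (Csub l l')) in *.
    destruct (h1 (d/2)) as [N1 hN1]. lra. destruct (h2 (d/2)) as [N2 hN2]. lra.
    specialize (hN1 (N1+N2)%nat ltac:(lia)). specialize (hN2 (N1+N2)%nat ltac:(lia)).
    pose proof (Cnorm_triangle_sub l l' (s (N1+N2)%nat)) as ht. rewrite (Cnorm_sub_sym l (s _)) in ht. fold d in ht. lra. }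
  replace l with (Cadd (Csub l l') l') by ring. rewrite H. ring.
Qed.

Lemma cconv_ext s t l : (forall n, s n = t n) -> cconv s l -> cconv t l.
Proof. intros e h eps he. destruct (h eps he) as [N hN]. exists N. intros n hn. rewrite <- e. auto. Qed.

Lemma cconv_shift s l : cconv s l -> cconv (fun n => s (S n)) l.
Proof. intros h eps he. destruct (h eps he) as [N hN]. exists N. intros n hn. apply hN. lia. Qed.

Lemma cconv_add s t l l' : cconv s l -> cconv t l' -> cconv (fun n => Cadd (s n) (t n)) (Cadd l l').
Proof.
  intros h1 h2 eps he. destruct (h1 (eps/2)) as [N1 hN1]. lra. destruct (h2 (eps/2)) as [N2 hN2]. lra.
  exists (N1+N2)%nat. intros n hn. specialize (hN1 n ltac:(lia)). specialize (hN2 n ltac:(lia)).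
  replace (Csub (Cadd (s n) (t n)) (Cadd l l')) with (Cadd (Csub (s n) l) (Csub (t n) l')) by ring.
  pose proof (Cnorm_triangle (Csub (s n) l) (Csub (t n) l')). lra.
Qed.

Lemma cconv_mul_const s l a : cconv s l -> cconv (fun n => Cmul a (s n)) (Cmul a l).
Proof.
  intros hc eps he. destruct (hc (eps / (Cnorm a + 1))) as [N hN].
  apply Rdiv_lt_0_compat; pose proof (Cnorm_ge0 a); lra.
  exists N. intros n hn. replace (Csub (Cmul a (s n)) (Cmul a l)) with (Cmul a (Csub (s n) l)) by ring.
  rewrite Cnorm_mul. specialize (hN n hn).
  pose proof (Cnorm_ge0 a). pose proof (Cnorm_ge0 (Csub (s n) l)).
  apply Rle_lt_trans with ((Cnorm a + 1) * Cnorm (Csub (s n) l)). nra.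
  apply Rmult_lt_compat_l with (r := Cnorm a + 1) in hN. 2: lra.
  replace ((Cnorm a + 1) * (eps / (Cnorm a + 1))) with eps in hN by (field; lra). lra.
Qed.

Lemma cconv_bounded s l : cconv s l -> exists B, forall n, Cnorm (s n) <= B.
Proof.
  intros h. destruct (h 1 Rlt_0_1) as [N hN].
  assert (forall k, exists B, forall n, (n < k)%nat -> Cnorm (s n) <= B) as fin.
  { induction k. exists 0. intros; lia. destruct IHk as [B hB]. exists (Rmax B (Cnorm (s k))).
    intros n hn. destruct (Nat.eq_dec n k). subst. apply Rmax_r.
    apply Rle_trans with B. apply hB; lia. apply Rmax_l. }
  destruct (fin N) as [B hB]. exists (Rmax B (Cnorm l + 1)). intros n.
  destruct (Nat.lt_ge_cases n N). apply Rle_trans with B; auto. apply Rmax_l.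
  apply Rle_trans with (Cnorm l + 1). 2: apply Rmax_r. specialize (hN n H).
  pose proof (Cnorm_sub_le (s n) l). lra.
Qed.

Lemma cconv_mul s t l l' : cconv s l -> cconv t l' -> cconv (fun n => Cmul (s n) (t n)) (Cmul l l').
Proof.
  intros h1 h2. destruct (cconv_bounded s l h1) as [B hB].
  intros eps he. set (B' := Rabs B + 1).
  assert (hB' : 0 < B') by (unfold B'; pose proof (Rabs_pos B); lra).
  set (c := Cnorm l' + 1). assert (hc : 0 < c) by (unfold c; pose proof (Cnorm_ge0 l'); lra).
  destruct (h1 (eps / (2*c))) as [N1 hN1]. apply Rdiv_lt_0_compat; lra.
  destruct (h2 (eps / (2*B'))) as [N2 hN2]. apply Rdiv_lt_0_compat; lra.
  exists (N1+N2)%nat. intros n hn. specialize (hN1 n ltac:(lia)). specialize (hN2 n ltac:(lia)).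
  replace (Csub (Cmul (s n) (t n)) (Cmul l l')) with
    (Cadd (Cmul (s n) (Csub (t n) l')) (Cmul (Csub (s n) l) l')) by ring.
  eapply Rle_lt_trans. apply Cnorm_triangle. rewrite !Cnorm_mul.
  assert (Cnorm (s n) <= B') by (specialize (hB n); pose proof (Rle_abs B); unfold B'; lra).
  pose proof (Cnorm_ge0 (s n)). pose proof (Cnorm_ge0 l'). pose proof (Cnorm_ge0 (Csub (t n) l')).
  pose proof (Cnorm_ge0 (Csub (s n) l)).
  assert (Cnorm (s n) * Cnorm (Csub (t n) l') < eps/2).
  { apply Rle_lt_trans with (B' * Cnorm (Csub (t n) l')). nra.
    apply Rmult_lt_compat_l with (r := B') in hN2; auto.
    replace (B' * (eps / (2*B'))) with (eps/2) in hN2 by (field; lra). lra. }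
  assert (Cnorm (Csub (s n) l) * Cnorm l' < eps/2).
  { apply Rle_lt_trans with (Cnorm (Csub (s n) l) * c). unfold c; nra.
    apply Rmult_lt_compat_r with (r := c) in hN1; auto.
    replace (eps / (2*c) * c) with (eps/2) in hN1 by (field; lra). lra. }
  lra.
Qed.

Lemma cconv_inner {H : HilbertSpace} (u : nat -> H) l y : hconv u l -> cconv (fun n => inner (u n) y) (inner l y).
Proof.
  intros hc eps he. destruct (hc (eps / (hnorm y + 1))) as [N hN].
  apply Rdiv_lt_0_compat; pose proof (hnorm_ge0 y); lra.
  exists N. intros n hn. rewrite <- inner_sub_l. eapply Rle_lt_trans. apply cauchy_schwarz.
  specialize (hN n hn). pose proof (hnorm_ge0 y). pose proof (hnorm_ge0 (vsub (u n) l)).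
  apply Rle_lt_trans with (hnorm (vsub (u n) l) * (hnorm y + 1)). nra.
  apply Rmult_lt_compat_r with (r := hnorm y + 1) in hN. 2: lra.
  replace (eps / (hnorm y + 1) * (hnorm y + 1)) with eps in hN by (field; lra). lra.
Qed.


Lemma vsub_add_l {H : HilbertSpace} (a b c : H) : vsub (vadd a b) c = vadd (vsub a c) b.
Proof. unfold vsub. rewrite <- !vadd_assoc. f_equal. apply vadd_comm. Qed.

Lemma hnorm_vsum_le {H : HilbertSpace} n (f : nat -> H) : hnorm (vsum n f) <= rsum n (fun k => hnorm (f k)).
Proof.
  induction n; simpl. rewrite hnorm_vzero. lra.
  eapply Rle_trans. apply hnorm_triangle. lra.
Qed.

Lemma vsum_tail {H : HilbertSpace} q d (f : nat -> H) :
  vsub (vsum (q + d) f) (vsum q f) = vsum d (fun i => f (q + i)%nat).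
Proof.
  induction d; simpl. rewrite Nat.add_0_r. apply vsub_diag.
  rewrite Nat.add_succ_r. simpl. rewrite vsub_add_l, IHd. reflexivity.
Qed.


Lemma geom_tail_bound K q d : 0 <= K -> rsum d (fun i => K * (1/2)^(q+i)) <= 2 * K * (1/2)^q.
Proof.
  intros hK. assert (forall g g' : nat -> R, (forall i, g i = g' i) -> rsum d g = rsum d g') as ext.
  { intros g g' e. clear -e. induction d; simpl; auto. rewrite IHd, e. auto. }
  rewrite (ext _ (fun i => (K * (1/2)^q) * (1/2)^i)).
  2: { intros i. rewrite pow_add. ring. }
  rewrite rsum_scal. pose proof (rsum_geom_le d (1/2) ltac:(lra)).
  pose proof (half_pow_pos q). replace (1 / (1 - 1/2)) with 2 in H by field.
  assert (0 <= K * (1/2)^q) by nra. replace (2 * K * (1/2)^q) with (K * (1/2)^q * 2) by ring. apply Rmult_le_compat_l; auto.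
Qed.

Lemma hseries_exists {H : HilbertSpace} (f : nat -> H) K :
  (forall k, hnorm (f k) <= K * (1/2)^k) -> exists l, hconv (fun N => vsum N f) l.
Proof.
  intros hf. assert (hK : 0 <= K).
  { specialize (hf O). pose proof (hnorm_ge0 (f O)). simpl in hf. lra. }
  assert (tail : forall q d, hnorm (vsub (vsum (q + d) f) (vsum q f)) <= 2 * K * (1/2)^q).
  { intros q d. rewrite vsum_tail. eapply Rle_trans. apply hnorm_vsum_le.
    eapply Rle_trans. 2: apply (geom_tail_bound K q d hK). apply rsum_le. intros; apply hf. }
  destruct (complete H (fun N => vsum N f)) as [l hl].
  - intros eps he. destruct (half_pow_small (eps / (2*K+1))) as [N hN].
    apply Rdiv_lt_0_compat; lra. exists N. intros p q hp hq.
    assert (hb : forall a b, (N <= b <= a)%nat -> hnorm (vsub (vsum a f) (vsum b f)) < eps).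
    { intros a b hab. replace a with (b + (a - b))%nat by lia.
      eapply Rle_lt_trans. apply tail. specialize (hN b ltac:(lia)).
      pose proof (half_pow_pos b).
      apply Rle_lt_trans with ((2*K+1) * (1/2)^b). nra.
      apply Rmult_lt_compat_l with (r := 2*K+1) in hN. 2: lra.
      replace ((2*K+1) * (eps / (2*K+1))) with eps in hN by (field; lra). lra. }
    fold (vsub (vsum p f) (vsum q f)). fold (hnorm (vsub (vsum p f) (vsum q f))).
    destruct (Nat.le_ge_cases q p). apply hb; lia. rewrite hnorm_sub_sym. apply hb; lia.
  - exists l. exact hl.
Qed.

Lemma hconv_le {H : HilbertSpace} (u : nat -> H) l z B N0 :
  hconv u l -> (forall n, (N0 <= n)%nat -> hnorm (vsub (u n) z) <= B) -> hnorm (vsub l z) <= B.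
Proof.
  intros hc hb. apply Rnot_lt_le. intros hlt.
  destruct (hc (hnorm (vsub l z) - B)) as [N hN]. lra.
  specialize (hN (N + N0)%nat ltac:(lia)). specialize (hb (N + N0)%nat ltac:(lia)).
  pose proof (hnorm_sub_tri l (u (N+N0)%nat) z). rewrite (hnorm_sub_sym l (u _)) in H0. lra.
Qed.

Fixpoint csum (n : nat) (f : nat -> CC) : CC :=
  match n with O => C0 | S k => Cadd (csum k f) (f k) end.

Lemma csum_ext n f g : (forall k, (k < n)%nat -> f k = g k) -> csum n f = csum n g.
Proof. induction n; simpl; intros h; auto. rewrite IHn, h; auto. Qed.

Lemma Cnorm_csum_le n f : Cnorm (csum n f) <= rsum n (fun k => Cnorm (f k)).
Proof.
  induction n; simpl. rewrite Cnorm_C0. lra.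
  eapply Rle_trans. apply Cnorm_triangle. lra.
Qed.

Lemma csum_tail q d f : Csub (csum (q + d) f) (csum q f) = csum d (fun i => f (q + i)%nat).
Proof.
  induction d; simpl. rewrite Nat.add_0_r. ring.
  rewrite Nat.add_succ_r. simpl. rewrite <- IHd. ring.
Qed.

Lemma rsum_ext n f g : (forall k, (k < n)%nat -> f k = g k) -> rsum n f = rsum n g.
Proof. induction n; simpl; intros h; auto. rewrite IHn, h; auto. Qed.

Lemma ccauchy_conv (s : nat -> CC) :
  (forall eps, 0 < eps -> exists N, forall p q, (N <= p)%nat -> (N <= q)%nat -> Cnorm (Csub (s p) (s q)) < eps) ->
  exists l, cconv s l.
Proof.
  intros hc.
  assert (c1 : Cauchy_crit (fun n => fst (s n))).
  { intros eps he. destruct (hc eps he) as [N hN]. exists N. intros p q hp hq.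
    unfold Rdist. eapply Rle_lt_trans. 2: apply (hN p q hp hq).
    eapply Rle_trans. 2: apply Cnorm_fst. unfold Csub, Cadd, Copp; simpl. unfold Rminus. lra. }
  assert (c2 : Cauchy_crit (fun n => snd (s n))).
  { intros eps he. destruct (hc eps he) as [N hN]. exists N. intros p q hp hq.
    unfold Rdist. eapply Rle_lt_trans. 2: apply (hN p q hp hq).
    eapply Rle_trans. 2: apply Cnorm_snd. unfold Csub, Cadd, Copp; simpl. unfold Rminus. lra. }
  destruct (R_complete _ c1) as [l1 h1]. destruct (R_complete _ c2) as [l2 h2].
  exists (l1, l2). intros eps he.
  destruct (h1 (eps/2)) as [N1 hN1]. lra. destruct (h2 (eps/2)) as [N2 hN2]. lra.
  exists (N1 + N2)%nat. intros n hn. specialize (hN1 n ltac:(lia)). specialize (hN2 n ltac:(lia)).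
  unfold Rdist in *. eapply Rle_lt_trans. apply Cnorm_le_comp. unfold Csub, Cadd, Copp; simpl.
  unfold Rminus in *. lra.
Qed.

Lemma cseries_exists (f : nat -> CC) K :
  (forall k, Cnorm (f k) <= K * (1/2)^k) -> exists l, cconv (fun N => csum N f) l.
Proof.
  intros hf. assert (hK : 0 <= K).
  { specialize (hf O). pose proof (Cnorm_ge0 (f O)). simpl in hf. lra. }
  assert (tail : forall q d, Cnorm (Csub (csum (q + d) f) (csum q f)) <= 2 * K * (1/2)^q).
  { intros q d. rewrite csum_tail. eapply Rle_trans. apply Cnorm_csum_le.
    eapply Rle_trans. 2: apply (geom_tail_bound K q d hK). apply rsum_le. intros; apply hf. }
  apply ccauchy_conv.
  intros eps he. destruct (half_pow_small (eps / (2*K+1))) as [N hN].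
  apply Rdiv_lt_0_compat; lra. exists N. intros p q hp hq.
  assert (hb : forall a b, (N <= b <= a)%nat -> Cnorm (Csub (csum a f) (csum b f)) < eps).
  { intros a b hab. replace a with (b + (a - b))%nat by lia.
    eapply Rle_lt_trans. apply tail. specialize (hN b ltac:(lia)).
    pose proof (half_pow_pos b).
    apply Rle_lt_trans with ((2*K+1) * (1/2)^b). nra.
    apply Rmult_lt_compat_l with (r := 2*K+1) in hN. 2: lra.
    replace ((2*K+1) * (eps / (2*K+1))) with eps in hN by (field; lra). lra. }
  destruct (Nat.le_ge_cases q p). apply hb; lia. rewrite Cnorm_sub_sym. apply hb; lia.
Qed.

Lemma cconv_le (s : nat -> CC) l z B N0 :
  cconv s l -> (forall n, (N0 <= n)%nat -> Cnorm (Csub (s n) z) <= B) -> Cnorm (Csub l z) <= B.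
Proof.
  intros hc hb. apply Rnot_lt_le. intros hlt.
  destruct (hc (Cnorm (Csub l z) - B)) as [N hN]. lra.
  specialize (hN (N + N0)%nat ltac:(lia)). specialize (hb (N + N0)%nat ltac:(lia)).
  pose proof (Cnorm_triangle_sub l z (s (N+N0)%nat)). rewrite (Cnorm_sub_sym l (s _)) in H. lra.
Qed.

Lemma Cpsum_csum a z0 z N : Cpsum a z0 z N = csum N (fun k => Cmul (a k) (Cpow (Csub z z0) k)).
Proof. induction N; simpl; auto. rewrite IHN. reflexivity. Qed.


Definition psum (c : nat -> CC) (t : CC) (N : nat) : CC :=
  csum N (fun k => Cmul (c k) (Cpow t k)).

Lemma csum_add n f g : csum n (fun k => Cadd (f k) (g k)) = Cadd (csum n f) (csum n g).
Proof. induction n; simpl. ring. rewrite IHn. ring. Qed.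

Lemma csum_mul_l n c f : csum n (fun k => Cmul c (f k)) = Cmul c (csum n f).
Proof. induction n; simpl. ring. rewrite IHn. ring. Qed.

Lemma geom_pow_bound K Q t k : 0 <= Q -> Cnorm t * Q <= 1/2 ->
  K * Q ^ k * Cnorm t ^ k <= Rabs K * (1/2)^k.
Proof.
  intros hQ ht. rewrite Rmult_assoc, <- Rpow_mult_distr.
  pose proof (Cnorm_ge0 t). assert (0 <= Q * Cnorm t) by nra.
  assert ((Q * Cnorm t)^k <= (1/2)^k) by (apply pow_incr; lra).
  pose proof (pow_le (Q * Cnorm t) k H0). pose proof (Rle_abs K). pose proof (Rabs_pos K).
  apply Rle_trans with (Rabs K * (Q * Cnorm t) ^ k). nra. apply Rmult_le_compat_l; auto.
Qed.

Lemma term_bound c K Q t k : 0 <= Q -> Cnorm t * Q <= 1/2 -> Cnorm (c k) <= K * Q ^ k ->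
  Cnorm (Cmul (c k) (Cpow t k)) <= Rabs K * (1/2)^k.
Proof.
  intros hQ ht hc. rewrite Cnorm_mul, Cnorm_pow. eapply Rle_trans. 2: apply geom_pow_bound; eauto.
  apply Rmult_le_compat_r; auto. apply pow_le, Cnorm_ge0.
Qed.

Lemma ps_exists c K Q t : 0 <= Q -> Cnorm t * Q <= 1/2 -> (forall k, Cnorm (c k) <= K * Q ^ k) ->
  exists L, cconv (psum c t) L.
Proof.
  intros hQ ht hc. apply (cseries_exists _ (Rabs K)). intros k. apply (term_bound c K Q); auto.
Qed.

Lemma ps_shift c t N : psum c t (S N) = Cadd (c O) (Cmul t (psum (fun k => c (S k)) t N)).
Proof.
  unfold psum. induction N. simpl. ring.
  change (csum (S (S N)) (fun k => Cmul (c k) (Cpow t k))) with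
    (Cadd (csum (S N) (fun k => Cmul (c k) (Cpow t k))) (Cmul (c (S N)) (Cpow t (S N)))).
  rewrite IHN. simpl. ring.
Qed.

Lemma ps_near0 c K Q t L : 0 <= Q -> Cnorm t * Q <= 1/2 -> (forall k, Cnorm (c k) <= K * Q ^ k) ->
  cconv (psum c t) L -> Cnorm (Csub L (c O)) <= 2 * Rabs K * Q * Cnorm t.
Proof.
  intros hQ ht hc hL. apply (cconv_le _ _ _ _ 1 hL). intros n hn.
  destruct n as [|N]. lia. rewrite ps_shift.
  replace (Csub (Cadd (c O) (Cmul t (psum (fun k => c (S k)) t N))) (c O)) with
    (Cmul t (psum (fun k => c (S k)) t N)) by ring.
  rewrite Cnorm_mul. unfold psum. pose proof (Cnorm_ge0 t).
  assert (Cnorm (csum N (fun k => Cmul (c (S k)) (Cpow t k))) <= 2 * Rabs K * Q).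
  { eapply Rle_trans. apply Cnorm_csum_le.
    replace (2 * Rabs K * Q) with (2 * Rabs (K * Q)).
    2: { rewrite Rabs_mult, (Rabs_right Q) by lra. ring. }
    replace (2 * Rabs (K * Q)) with (2 * Rabs (K * Q) * (1/2)^0) by (simpl; ring).
    eapply Rle_trans. 2: apply (geom_tail_bound (Rabs (K * Q)) 0 N (Rabs_pos _)).
    apply rsum_le. intros k _. simpl.
    apply (term_bound (fun k => c (S k)) (K*Q) Q); auto. rewrite hc. simpl. apply Req_le; ring. }
  nra.
Qed.

Lemma term_bound_h c K Q t h k : 0 <= Q -> Cnorm t * Q <= h -> Cnorm (c k) <= K * Q ^ k ->
  Cnorm (Cmul (c k) (Cpow t k)) <= Rabs K * h^k.
Proof.
  intros hQ ht hc. rewrite Cnorm_mul, Cnorm_pow.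
  pose proof (Cnorm_ge0 t). pose proof (Cnorm_ge0 (c k)). assert (0 <= Q * Cnorm t) by nra.
  assert ((Q * Cnorm t)^k <= h^k) by (apply pow_incr; lra).
  pose proof (pow_le (Cnorm t) k H). pose proof (Rle_abs K). pose proof (Rabs_pos K).
  apply Rle_trans with (K * Q ^ k * Cnorm t ^ k). apply Rmult_le_compat_r; auto.
  rewrite Rmult_assoc, <- Rpow_mult_distr. pose proof (pow_le (Q * Cnorm t) k H1).
  apply Rle_trans with (Rabs K * (Q * Cnorm t) ^ k). nra. apply Rmult_le_compat_l; auto.
Qed.

Lemma zero_of_small x C d0 : 0 < d0 -> 0 <= x -> 0 <= C -> (forall d, 0 < d < d0 -> x <= C * d) -> x = 0.
Proof.
  intros hd hx hC h. destruct hx as [hx|hx]; auto. exfalso.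
  set (d := Rmin (d0/2) (x / (2*(C+1)))).
  assert (0 < d) by (unfold d; apply Rmin_pos; [lra| apply Rdiv_lt_0_compat; lra]).
  assert (d <= d0/2) by apply Rmin_l. assert (d <= x / (2*(C+1))) by apply Rmin_r.
  specialize (h d ltac:(lra)).
  assert (C * d <= C * (x / (2*(C+1)))) by (apply Rmult_le_compat_l; lra).
  assert (C * (x / (2*(C+1))) < x).
  { replace (C * (x / (2*(C+1)))) with (x * (C / (2*(C+1)))) by (field; lra).
    assert (C / (2*(C+1)) < 1). { apply Rmult_lt_reg_r with (2*(C+1)). lra.
      replace (C / (2*(C+1)) * (2*(C+1))) with C by (field; lra). lra. }
    nra. }
  lra.
Qed.

Lemma ps_unique k : forall c K Q rho, 0 <= Q -> 0 < rho -> (forall j, Cnorm (c j) <= K * Q ^ j) ->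
  (forall t, t <> C0 -> Cnorm t < rho -> cconv (psum c t) C0) -> c k = C0.
Proof.
  assert (base : forall c K Q rho, 0 <= Q -> 0 < rho -> (forall j, Cnorm (c j) <= K * Q ^ j) ->
    (forall t, t <> C0 -> Cnorm t < rho -> cconv (psum c t) C0) -> c O = C0).
  { intros c K Q rho hQ hr hc h. apply Cnorm_eq0.
    apply (zero_of_small _ (2 * Rabs K * Q) (Rmin rho (1/(2*Q+1)))).
    apply Rmin_pos; auto. apply Rdiv_lt_0_compat; lra. apply Cnorm_ge0.
    pose proof (Rabs_pos K). nra.
    intros d hd. assert (d < rho) by (pose proof (Rmin_l rho (1/(2*Q+1))); lra).
    assert (d < 1/(2*Q+1)) by (pose proof (Rmin_r rho (1/(2*Q+1))); lra).
    assert (hnt : Cnorm (d, 0) = d) by (rewrite Cnorm_real; apply Rabs_right; lra).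
    assert (ht : Cnorm (d,0) * Q <= 1/2).
    { rewrite hnt. assert (d * (2*Q+1) < 1).
      { apply Rmult_lt_reg_r with (/(2*Q+1)). apply Rinv_0_lt_compat; lra.
        replace (d * (2*Q+1) * /(2*Q+1)) with d by (field; lra). lra. }
      nra. }
    assert (hne : (d,0) <> C0) by (intro e; injection e; lra).
    pose proof (ps_near0 c K Q (d,0) C0 hQ ht hc (h _ hne ltac:(lra))) as hb.
    rewrite Cnorm_sub_sym, Csub_C0, hnt in hb. exact hb. }
  induction k; intros c K Q rho hQ hr hc h.
  - eapply base; eauto.
  - pose proof (base c K Q rho hQ hr hc h) as h0.
    apply (IHk (fun j => c (S j)) (K * Q) Q rho hQ hr).
    + intros j. rewrite hc. simpl. apply Req_le. ring.
    + intros t ht htr. specialize (h t ht htr).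
      apply cconv_shift in h. apply (cconv_mul_const _ _ (Cinv t)) in h.
      replace (Cmul (Cinv t) C0) with C0 in h by ring.
      eapply cconv_ext. 2: exact h. intros n. simpl. rewrite ps_shift, h0.
      replace (Cmul (Cinv t) (Cadd C0 (Cmul t (psum (fun k => c (S k)) t n)))) with
        (Cmul (Cmul t (Cinv t)) (psum (fun k => c (S k)) t n)) by ring.
      rewrite Cinv_r by auto. ring.
Qed.

Definition conv (a b : nat -> CC) (k : nat) : CC := csum (S k) (fun j => Cmul (a j) (b (k - j)%nat)).

Lemma csum_S n f : csum (S n) f = Cadd (csum n f) (f n).
Proof. reflexivity. Qed.

Lemma conv_term a b t N : Cmul (conv a b N) (Cpow t N) =
  csum (S N) (fun j => Cmul (Cmul (a j) (Cpow t j)) (Cmul (b (N - j)%nat) (Cpow t (N - j)))).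
Proof.
  unfold conv. replace (Cmul (csum (S N) (fun j => Cmul (a j) (b (N - j)%nat))) (Cpow t N)) with
    (Cmul (Cpow t N) (csum (S N) (fun j => Cmul (a j) (b (N - j)%nat)))) by ring.
  rewrite <- csum_mul_l. apply csum_ext. intros j hj.
  assert (Cpow t N = Cmul (Cpow t j) (Cpow t (N - j))) as e.
  { rewrite <- Cpow_add. f_equal. lia. }
  rewrite e. ring.
Qed.

Lemma conv_formula a b t N :
  psum (conv a b) t N = csum N (fun j => Cmul (Cmul (a j) (Cpow t j)) (psum b t (N - j))).
Proof.
  induction N. reflexivity.
  change (psum (conv a b) t (S N)) with (Cadd (psum (conv a b) t N) (Cmul (conv a b N) (Cpow t N))).
  rewrite IHN, conv_term.
  rewrite (csum_S N (fun j => Cmul (Cmul (a j) (Cpow t j)) (psum b t (S N - j)))). cbv beta.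
  replace (S N - N)%nat with 1%nat by lia.
  rewrite (csum_ext N (fun j => Cmul (Cmul (a j) (Cpow t j)) (psum b t (S N - j)))
                      (fun j => Cadd (Cmul (Cmul (a j) (Cpow t j)) (psum b t (N - j)))
                                      (Cmul (Cmul (a j) (Cpow t j)) (Cmul (b (N - j)%nat) (Cpow t (N - j)))))).
  2: { intros j hj. replace (S N - j)%nat with (S (N - j)) by lia.
       change (psum b t (S (N - j))) with (Cadd (psum b t (N - j)) (Cmul (b (N - j)%nat) (Cpow t (N - j)))).
       ring. }
  rewrite csum_add, csum_S, Nat.sub_diag. unfold psum. simpl. ring.
Qed.

Lemma csum_sub n f g : csum n (fun k => Csub (f k) (g k)) = Csub (csum n f) (csum n g).
Proof. induction n; simpl. ring. rewrite IHn. ring. Qed.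

Lemma rsum_const n c : rsum n (fun _ => c) = INR n * c.
Proof. induction n; simpl. ring. rewrite IHn. destruct n; simpl; ring. Qed.

Lemma INR_le_pow2 n : INR n <= 2 ^ n.
Proof.
  induction n. simpl. lra. rewrite S_INR. simpl. assert (1 <= 2^n) by (apply pow_R1_Rle; lra). lra.
Qed.

Lemma n_quarter_pow n : INR n * (1/4)^n <= (1/2)^n.
Proof.
  replace ((1/4)^n) with ((1/2)^n * (1/2)^n) by (rewrite <- Rpow_mult_distr; f_equal; lra).
  pose proof (INR_le_pow2 n). pose proof (half_pow_pos n).
  assert (2^n * (1/2)^n = 1) by (rewrite <- Rpow_mult_distr; replace (2 * (1/2)) with 1 by lra; apply pow1).
  nra.
Qed.

Lemma cauchy_product a b K L Q t A B : 0 <= Q -> Cnorm t * Q <= 1/4 ->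
  (forall k, Cnorm (a k) <= K * Q ^ k) -> (forall k, Cnorm (b k) <= L * Q ^ k) ->
  cconv (psum a t) A -> cconv (psum b t) B -> cconv (psum (conv a b) t) (Cmul A B).
Proof.
  intros hQ ht ha hb hA hB.
  set (D := fun N => Csub (Cmul (psum a t N) (psum b t N)) (psum (conv a b) t N)).
  assert (hD : forall N, Cnorm (D N) <= 2 * Rabs K * Rabs L * (1/2)^N).
  { intros N. unfold D. rewrite conv_formula.
    replace (Cmul (psum a t N) (psum b t N)) with (Cmul (psum b t N) (psum a t N)) by ring.
    unfold psum at 2. rewrite <- csum_mul_l, <- csum_sub.
    eapply Rle_trans. apply Cnorm_csum_le.
    eapply Rle_trans with (rsum N (fun _ => 2 * Rabs K * Rabs L * (1/4)^N)).
    - apply rsum_le. intros j hj.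
      replace (Csub (Cmul (psum b t N) (Cmul (a j) (Cpow t j))) (Cmul (Cmul (a j) (Cpow t j)) (psum b t (N - j))))
        with (Cmul (Cmul (a j) (Cpow t j)) (Csub (psum b t N) (psum b t (N - j)))) by ring.
      rewrite Cnorm_mul.
      assert (e : psum b t N = psum b t ((N - j) + j)) by (f_equal; lia).
      rewrite e. unfold psum. rewrite csum_tail.
      assert (h1 : Cnorm (Cmul (a j) (Cpow t j)) <= Rabs K * (1/4)^j) by (apply (term_bound_h a K Q); auto).
      assert (h2 : Cnorm (csum j (fun i => Cmul (b (N - j + i)%nat) (Cpow t (N - j + i)))) <= 2 * Rabs L * (1/4)^(N-j)).
      { eapply Rle_trans. apply Cnorm_csum_le.
        apply Rle_trans with (rsum j (fun i => (Rabs L * (1/4)^(N-j)) * (1/4)^i)).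
        - apply rsum_le. intros i hi. rewrite Rmult_assoc, <- pow_add.
          apply (term_bound_h b L Q); auto.
        - rewrite rsum_scal. pose proof (rsum_geom_le j (1/4) ltac:(lra)).
          replace (1 / (1 - 1/4)) with (4/3) in H by field.
          assert (0 <= Rabs L * (1/4)^(N-j)) by (apply Rmult_le_pos; [apply Rabs_pos| apply pow_le; lra]).
          apply Rle_trans with (Rabs L * (1/4)^(N-j) * (4/3)). apply Rmult_le_compat_l; auto. lra. }
      pose proof (Cnorm_ge0 (Cmul (a j) (Cpow t j))).
      pose proof (Cnorm_ge0 (csum j (fun i => Cmul (b (N - j + i)%nat) (Cpow t (N - j + i))))).
      apply Rle_trans with ((Rabs K * (1/4)^j) * (2 * Rabs L * (1/4)^(N-j))).
      apply Rmult_le_compat; auto.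
      assert (ee : (1/4)^N = (1/4)^j * (1/4)^(N-j)) by (rewrite <- pow_add; f_equal; lia). rewrite ee. apply Req_le. ring.
    - rewrite rsum_const. pose proof (n_quarter_pow N).
      assert (0 <= 2 * Rabs K * Rabs L) by (pose proof (Rabs_pos K); pose proof (Rabs_pos L); nra).
      replace (INR N * (2 * Rabs K * Rabs L * (1 / 4) ^ N)) with ((2 * Rabs K * Rabs L) * (INR N * (1/4)^N)) by ring.
      apply Rmult_le_compat_l; auto. }
  pose proof (cconv_mul _ _ _ _ hA hB) as hAB.
  assert (hD0 : cconv D C0).
  { intros eps he. set (C := 2 * Rabs K * Rabs L + 1).
    assert (0 < C) by (unfold C; pose proof (Rabs_pos K); pose proof (Rabs_pos L); nra).
    destruct (half_pow_small (eps / C)) as [N hN]. apply Rdiv_lt_0_compat; lra.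
    exists N. intros n hn. rewrite Csub_C0. specialize (hN n hn). specialize (hD n).
    pose proof (half_pow_pos n).
    apply Rle_lt_trans with (C * (1/2)^n). unfold C in *. nra.
    apply Rmult_lt_compat_l with (r := C) in hN; auto.
    replace (C * (eps / C)) with eps in hN by (field; lra). lra. }
  apply (cconv_mul_const _ _ (Copp C1)) in hD0.
  pose proof (cconv_add _ _ _ _ hAB hD0) as hh.
  replace (Cadd (Cmul A B) (Cmul (Copp C1) C0)) with (Cmul A B) in hh by ring.
  eapply cconv_ext. 2: exact hh. intros n. unfold D. ring.
Qed.

Lemma ps_coef_bound a z L : z <> C0 -> cconv (psum a z) L ->
  exists Bd, 0 <= Bd /\ forall k, Cnorm (a k) <= Bd * (/ Cnorm z) ^ k.
Proof.
  intros hz hc. destruct (cconv_bounded _ _ hc) as [B hB].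
  pose proof (Cnorm_pos z hz) as hzp.
  exists (2 * Rabs B). split. pose proof (Rabs_pos B); lra. intros k.
  assert (e : Cmul (a k) (Cpow z k) = Csub (psum a z (S k)) (psum a z k)).
  { unfold psum. simpl. ring. }
  assert (Cnorm (Cmul (a k) (Cpow z k)) <= 2 * Rabs B).
  { rewrite e. replace (Csub (psum a z (S k)) (psum a z k)) with (Cadd (psum a z (S k)) (Copp (psum a z k))) by reflexivity.
    eapply Rle_trans. apply Cnorm_triangle. rewrite Cnorm_opp. pose proof (hB (S k)). pose proof (hB k).
    pose proof (Rle_abs B). lra. }
  rewrite Cnorm_mul, Cnorm_pow in H.
  assert (0 < Cnorm z ^ k) by (apply pow_lt; auto).
  rewrite pow_inv.
  apply Rmult_le_reg_r with (Cnorm z ^ k); auto.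
  replace (2 * Rabs B * / Cnorm z ^ k * Cnorm z ^ k) with (2 * Rabs B) by (field; lra). exact H.
Qed.


Lemma baire_step {H : HilbertSpace} (P : nat -> H -> Prop) :
  (forall n y, ~ P n y -> exists e, 0 < e /\ forall z, hnorm (vsub z y) < e -> ~ P n z) ->
  (forall n (y0 : H) d, 0 < d -> exists z, hnorm (vsub z y0) < d /\ ~ P n z) ->
  forall k (p : H * R), exists p' : H * R, 0 < snd p ->
    0 < snd p' /\ snd p' <= snd p / 4 /\ hnorm (vsub (fst p') (fst p)) + snd p' <= snd p /\
    (forall z, hnorm (vsub z (fst p')) <= snd p' -> ~ P k z).
Proof.
  intros hcl hno k [x r]. simpl.
  destruct (Rlt_le_dec 0 r) as [hr|hr].
  2: { exists (x, r). intros; lra. }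
  destruct (hno k x (r/2) ltac:(lra)) as [z [hz hPz]].
  destruct (hcl k z hPz) as [e [he hze]].
  exists (z, Rmin (e/2) (r/4)). intros _. simpl.
  pose proof (Rmin_l (e/2) (r/4)). pose proof (Rmin_r (e/2) (r/4)).
  assert (0 < Rmin (e/2) (r/4)) by (apply Rmin_pos; lra).
  split; [auto|split; [lra|split; [lra|]]].
  intros w hw. apply hze. lra.
Qed.

Lemma baire {H : HilbertSpace} (P : nat -> H -> Prop) :
  (forall y, exists n, P n y) ->
  (forall n y, ~ P n y -> exists e, 0 < e /\ forall z, hnorm (vsub z y) < e -> ~ P n z) ->
  exists n y0 d, 0 < d /\ forall z, hnorm (vsub z y0) < d -> P n z.
Proof.
  intros hall hcl. apply NNPP. intros hcon.
  assert (hno : forall n (y0 : H) d, 0 < d -> exists z, hnorm (vsub z y0) < d /\ ~ P n z).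
  { intros n y0 d hd. apply NNPP. intros h2. apply hcon. exists n, y0, d. split; auto.
    intros z hz. apply NNPP. intros h3. apply h2. exists z. auto. }
  pose proof (baire_step P hcl hno) as st.
  set (stepf := fun k p => proj1_sig (constructive_indefinite_description _ (st k p))).
  assert (hstep : forall k p, 0 < snd p ->
    0 < snd (stepf k p) /\ snd (stepf k p) <= snd p / 4 /\ hnorm (vsub (fst (stepf k p)) (fst p)) + snd (stepf k p) <= snd p /\
    (forall z, hnorm (vsub z (fst (stepf k p))) <= snd (stepf k p) -> ~ P k z)).
  { intros k p hp. unfold stepf. destruct (constructive_indefinite_description _ (st k p)) as [p' hp']. simpl. auto. }
  set (sq := fix sq (k : nat) : H * R := match k with O => (vzero, 1) | S j => stepf j (sq j) end).
  assert (hpos : forall k, 0 < snd (sq k) /\ snd (sq k) <= (1/4)^k).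
  { induction k. simpl. lra. destruct IHk as [h1 h2]. change (sq (S k)) with (stepf k (sq k)).
    destruct (hstep k (sq k) h1) as [a [b _]]. split; auto. simpl. lra. }
  assert (hmono : forall q d, hnorm (vsub (fst (sq (q + d)%nat)) (fst (sq q))) + snd (sq (q+d)%nat) <= snd (sq q)).
  { intros q d. induction d. rewrite Nat.add_0_r, vsub_diag, hnorm_vzero. lra.
    rewrite Nat.add_succ_r. change (sq (S (q + d))) with (stepf (q+d)%nat (sq (q+d)%nat)).
    destruct (hstep (q+d)%nat (sq (q+d)%nat) (proj1 (hpos _))) as [_ [_ [h3 _]]].
    pose proof (hnorm_sub_tri (fst (stepf (q + d)%nat (sq (q + d)%nat))) (fst (sq (q + d)%nat)) (fst (sq q))). lra. }
  assert (hcau : forall q n, (q <= n)%nat -> hnorm (vsub (fst (sq n)) (fst (sq q))) <= (1/4)^q).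
  { intros q n hqn. replace n with (q + (n - q))%nat by lia. pose proof (hmono q (n - q)%nat).
    pose proof (hpos (q + (n - q))%nat). pose proof (hpos q). lra. }
  destruct (complete H (fun k => fst (sq k))) as [l hl].
  - intros eps he. destruct (half_pow_small eps he) as [N hN]. exists N. intros p q hp hq.
    fold (vsub (fst (sq p)) (fst (sq q))). fold (hnorm (vsub (fst (sq p)) (fst (sq q)))).
    assert (forall a b, (N <= b <= a)%nat -> hnorm (vsub (fst (sq a)) (fst (sq b))) < eps).
    { intros a b hab. eapply Rle_lt_trans. apply hcau. lia.
      eapply Rle_lt_trans. 2: apply (hN b); lia. apply pow_incr; lra. }
    destruct (Nat.le_ge_cases q p). apply H0; lia. rewrite hnorm_sub_sym. apply H0; lia.
  - assert (hl' : hconv (fun k => fst (sq k)) l) by exact hl.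
    destruct (hall l) as [n hn].
    assert (hb : hnorm (vsub l (fst (sq (S n)))) <= snd (sq (S n))).
    { apply (hconv_le _ _ _ _ (S n) hl'). intros m hm. 
      pose proof (hmono (S n) (m - S n)%nat). replace (S n + (m - S n))%nat with m in H0 by lia.
      pose proof (hnorm_ge0 (vsub (fst (sq m)) (fst (sq (S n))))). pose proof (hpos m). lra. }
    change (sq (S n)) with (stepf n (sq n)) in hb.
    destruct (hstep n (sq n) (proj1 (hpos n))) as [_ [_ [_ h4]]].
    exact (h4 l hb hn).
Qed.

Lemma vsub_vzero {H : HilbertSpace} (x : H) : vsub x vzero = x.
Proof. unfold vsub. rewrite vopp_vzero. apply vadd_0. Qed.

Lemma hnorm_scale_real {H : HilbertSpace} s (x : H) : 0 <= s -> hnorm (vscale (s,0) x) = s * hnorm x.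
Proof. intros hs. rewrite hnorm_scale, Cnorm_real, Rabs_right; lra. Qed.

Lemma vscale_inv_real {H : HilbertSpace} s (x : H) : s <> 0 -> vscale (/s, 0) (vscale (s,0) x) = x.
Proof.
  intros hs. rewrite vscale_assoc. rewrite <- (vscale_1 H x) at 2. f_equal.
  unfold Cmul, C1; simpl. f_equal; field; auto.
Qed.

Lemma approx_lemma {H : HilbertSpace} (A : H -> H) : bounded_op A -> (forall y, exists x, A x = y) ->
  exists M, 0 < M /\ forall y e, 0 < e -> exists x, hnorm x <= M * hnorm y /\ hnorm (vsub (A x) y) < e.
Proof.
  intros hA hsurj. pose proof (bounded_linear A hA) as hlin.
  set (P := fun (n : nat) (y : H) => forall e, 0 < e -> exists x, hnorm x <= INR n /\ hnorm (vsub (A x) y) < e).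
  assert (h1 : forall y, exists n, P n y).
  { intros y. destruct (hsurj y) as [x0 hx0]. destruct (INR_archimed 1 (hnorm x0)) as [n hn]. lra.
    exists n. intros e he. exists x0. split. lra. rewrite hx0, vsub_diag, hnorm_vzero. auto. }
  assert (h2 : forall n y, ~ P n y -> exists e, 0 < e /\ forall z, hnorm (vsub z y) < e -> ~ P n z).
  { intros n y hn. unfold P in hn. apply not_all_ex_not in hn. destruct hn as [e0 he0].
    apply imply_to_and in he0. destruct he0 as [he0 hno].
    exists (e0/2). split. lra. intros z hz hPz. destruct (hPz (e0/2) ltac:(lra)) as [x [hx1 hx2]].
    apply hno. exists x. split; auto.
    pose proof (hnorm_sub_tri (A x) z y). lra. }
  destruct (baire P h1 h2) as [n [y0 [d [hd hball]]]].
  assert (h3 : forall y, hnorm y < d -> forall e, 0 < e -> exists x, hnorm x <= 2 * INR n /\ hnorm (vsub (A x) y) < e).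
  { intros y hy e he.
    assert (hy1 : hnorm (vsub (vadd y0 y) y0) < d).
    { unfold vsub. rewrite (vadd_comm _ y0 y), <- vadd_assoc, vadd_opp, vadd_0. auto. }
    destruct (hball _ hy1 (e/2) ltac:(lra)) as [x1 [hx1 hx1']].
    assert (hy2 : hnorm (vsub y0 y0) < d) by (rewrite vsub_diag, hnorm_vzero; auto).
    destruct (hball _ hy2 (e/2) ltac:(lra)) as [x2 [hx2 hx2']].
    exists (vsub x1 x2). split.
    - unfold vsub. eapply Rle_trans. apply hnorm_triangle. rewrite hnorm_opp. lra.
    - rewrite lin_sub by auto.
      assert (vsub (vsub (A x1) (A x2)) y = vsub (vsub (A x1) (vadd y0 y)) (vsub (A x2) y0)) as ee.
      { unfold vsub. rewrite !vopp_add, !vopp_opp.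
        rewrite <- !vadd_assoc. f_equal.
        rewrite (vadd_comm _ (vopp y0) (vadd (vopp y) (vadd (vopp (A x2)) y0))).
        rewrite <- !vadd_assoc. rewrite vadd_opp, vadd_0.
        apply vadd_comm. }
      rewrite ee. unfold vsub at 1. eapply Rle_lt_trans. apply hnorm_triangle. rewrite hnorm_opp. lra. }
  set (M := 4 * INR n / d + 1).
  assert (hM : 0 < M) by (unfold M; pose proof (pos_INR n); assert (0 <= 4 * INR n / d) by (apply Rmult_le_pos; [lra|left; apply Rinv_0_lt_compat; lra]); lra).
  exists M. split; auto. intros y e he.
  destruct (classic (y = vzero)) as [hy0|hy0].
  { exists vzero. subst. rewrite (lin_zero A hlin). rewrite vsub_diag, !hnorm_vzero. split; lra. }
  assert (hny : 0 < hnorm y) by (destruct (hnorm_ge0 y) as [h|h]; auto; symmetry in h; apply hnorm_eq0 in h; contradiction).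
  set (s := d / (2 * hnorm y)).
  assert (hs : 0 < s) by (unfold s; apply Rdiv_lt_0_compat; lra).
  assert (hy' : hnorm (vscale (s,0) y) < d).
  { rewrite hnorm_scale_real by lra. unfold s. replace (d / (2 * hnorm y) * hnorm y) with (d/2) by (field; lra). lra. }
  destruct (h3 _ hy' (e * s) ltac:(nra)) as [x' [hx' hx'']].
  exists (vscale (/s, 0) x'). split.
  - rewrite hnorm_scale_real by (left; apply Rinv_0_lt_compat; auto).
    apply Rle_trans with (/s * (2 * INR n)). apply Rmult_le_compat_l; auto. left; apply Rinv_0_lt_compat; auto.
    unfold s, M. replace (/ (d / (2 * hnorm y)) * (2 * INR n)) with (4 * INR n / d * hnorm y) by (field; lra).
    lra.
  - destruct hlin as [ha hsc]. rewrite hsc.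
    rewrite <- (vscale_inv_real s y) by lra. rewrite <- vscale_sub.
    rewrite hnorm_scale_real by (left; apply Rinv_0_lt_compat; auto).
    apply Rmult_lt_compat_l with (r := /s) in hx''. 2: apply Rinv_0_lt_compat; auto.
    replace (/ s * (e * s)) with e in hx'' by (field; lra). exact hx''.
Qed.

Lemma open_mapping {H : HilbertSpace} (A : H -> H) : bounded_op A -> (forall y, exists x, A x = y) ->
  exists c, 0 < c /\ forall y, exists x, A x = y /\ hnorm x <= c * hnorm y.
Proof.
  intros hA hsurj. pose proof (bounded_linear A hA) as hlin.
  destruct (approx_lemma A hA hsurj) as [M [hM happ]].
  assert (hex : forall y : H, exists x, hnorm x <= M * hnorm y /\ hnorm (vsub y (A x)) <= hnorm y / 2).
  { intros y. destruct (classic (y = vzero)) as [hy0|hy0].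
    - exists vzero. subst. rewrite (lin_zero A hlin), vsub_diag, hnorm_vzero. split; lra.
    - assert (hny : 0 < hnorm y) by (destruct (hnorm_ge0 y) as [h|h]; auto; symmetry in h; apply hnorm_eq0 in h; contradiction).
      destruct (happ y (hnorm y / 2) ltac:(lra)) as [x [h1 h2]]. exists x. split; auto.
      rewrite hnorm_sub_sym. lra. }
  set (xf := fun y => proj1_sig (constructive_indefinite_description _ (hex y))).
  assert (hxf : forall y, hnorm (xf y) <= M * hnorm y /\ hnorm (vsub y (A (xf y))) <= hnorm y / 2).
  { intros y. unfold xf. destruct (constructive_indefinite_description _ (hex y)). simpl. auto. }
  exists (2 * M + 1). split. lra. intros y.
  set (rs := fix rs (k : nat) : H := match k with O => y | S j => vsub (rs j) (A (xf (rs j))) end).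
  assert (hr : forall k, hnorm (rs k) <= hnorm y * (1/2)^k).
  { induction k. simpl. lra. change (rs (S k)) with (vsub (rs k) (A (xf (rs k)))).
    destruct (hxf (rs k)) as [_ h2]. simpl. lra. }
  assert (hxs : forall k, hnorm (xf (rs k)) <= M * hnorm y * (1/2)^k).
  { intros k. destruct (hxf (rs k)) as [h1 _]. pose proof (hr k). rewrite Rmult_assoc. 
    apply Rle_trans with (M * hnorm (rs k)); auto. apply Rmult_le_compat_l; lra. }
  destruct (hseries_exists (fun k => xf (rs k)) (M * hnorm y) hxs) as [x hx].
  assert (hsum : forall N, A (vsum N (fun k => xf (rs k))) = vsub y (rs N)).
  { induction N. simpl. rewrite (lin_zero A hlin), vsub_diag. reflexivity.
    simpl. rewrite (proj1 hlin), IHN. change (rs (S N)) with (vsub (rs N) (A (xf (rs N)))).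
    unfold vsub. rewrite vopp_add, vopp_opp. rewrite <- vadd_assoc. reflexivity. }
  exists x. split.
  - pose proof (hconv_op A _ _ hA hx) as h1.
    apply (hconv_unique _ _ _ h1). eapply hconv_ext. intros n. symmetry. apply hsum.
    intros eps he. destruct (half_pow_small (eps / (hnorm y + 1))) as [N hN].
    apply Rdiv_lt_0_compat; pose proof (hnorm_ge0 y); lra.
    exists N. intros n hn. specialize (hN n hn).
    assert (vsub (vsub y (rs n)) y = vopp (rs n)) as ee.
    { unfold vsub. rewrite (vadd_comm _ y), <- vadd_assoc, vadd_opp, vadd_0. reflexivity. }
    rewrite ee, hnorm_opp. eapply Rle_lt_trans. apply hr.
    pose proof (hnorm_ge0 y). pose proof (half_pow_pos n).
    apply Rle_lt_trans with ((hnorm y + 1) * (1/2)^n). nra.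
    apply Rmult_lt_compat_l with (r := hnorm y + 1) in hN. 2: lra.
    replace ((hnorm y + 1) * (eps / (hnorm y + 1))) with eps in hN by (field; lra). lra.
  - rewrite <- (vsub_vzero x). apply (hconv_le _ _ _ _ O hx). intros n _.
    rewrite vsub_vzero. eapply Rle_trans. apply hnorm_vsum_le.
    pose proof (hnorm_ge0 y). 
    apply Rle_trans with (2 * M * hnorm y). 2: nra.
    replace (2 * M * hnorm y) with (2 * (M * hnorm y) * (1/2)^0) by (simpl; ring).
    eapply Rle_trans. 2: apply (geom_tail_bound (M * hnorm y) 0 n). 2: nra.
    apply rsum_le. intros k _. simpl. apply hxs.
Qed.


Lemma vadd_sub_swap {H : HilbertSpace} (a b c d : H) : vsub (vadd a b) (vadd c d) = vadd (vsub a c) (vsub b d).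
Proof.
  unfold vsub. rewrite vopp_add. rewrite <- !vadd_assoc. f_equal.
  rewrite !vadd_assoc. f_equal. apply vadd_comm.
Qed.

Lemma vscale_comm {H : HilbertSpace} a b (x : H) : vscale a (vscale b x) = vscale b (vscale a x).
Proof. rewrite !vscale_assoc. f_equal. ring. Qed.

Lemma op_shift_bounded {H : HilbertSpace} (T : H -> H) l : bounded_op T -> bounded_op (op_shift T l).
Proof.
  intros hT. destruct (bounded_pos T hT) as [M [hM hb]]. destruct hT as [ha [hs _]].
  unfold op_shift. split; [|split].
  - intros x y. rewrite ha, vscale_distr_v. apply vadd_sub_swap.
  - intros a x. rewrite hs, (vscale_comm l a). rewrite vscale_sub. reflexivity.
  - exists (M + Cnorm l). intros x. unfold vsub. eapply Rle_trans. apply hnorm_triangle.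
    rewrite hnorm_opp, hnorm_scale. specialize (hb x). lra.
Qed.

Lemma chain_exists {H : HilbertSpace} (A : H -> H) c :
  (forall y, exists x, A x = y /\ hnorm x <= c * hnorm y) -> 0 <= c ->
  forall v : H, exists f : nat -> H, f O = v /\ (forall k, A (f (S k)) = f k) /\ (forall k, hnorm (f k) <= hnorm v * c ^ k).
Proof.
  intros hpre hc v.
  set (pre := fun y => proj1_sig (constructive_indefinite_description _ (hpre y))).
  assert (hp : forall y, A (pre y) = y /\ hnorm (pre y) <= c * hnorm y).
  { intros y. unfold pre. destruct (constructive_indefinite_description _ (hpre y)). simpl. auto. }
  set (f := fix f (k : nat) : H := match k with O => v | S j => pre (f j) end).
  exists f. split; [reflexivity|split].
  - intros k. change (f (S k)) with (pre (f k)). apply hp.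
  - induction k. simpl. lra. change (f (S k)) with (pre (f k)). destruct (hp (f k)) as [_ h].
    simpl. apply Rle_trans with (c * hnorm (f k)); auto.
    replace (hnorm v * (c * c ^ k)) with (c * (hnorm v * c^k)) by ring. apply Rmult_le_compat_l; auto.
Qed.

Lemma inner_vsum_l {H : HilbertSpace} n (f : nat -> H) y : inner (vsum n f) y = csum n (fun k => inner (f k) y).
Proof. induction n; simpl. apply inner_0_l. rewrite inner_add_l, IHn. reflexivity. Qed.

Definition vps {H : HilbertSpace} (e : nat -> H) (t : CC) (N : nat) : H :=
  vsum N (fun k => vscale (Cpow t k) (e k)).

Lemma vps_exists {H : HilbertSpace} (e : nat -> H) K Q t : 0 <= Q -> Cnorm t * Q <= 1/2 ->
  (forall k, hnorm (e k) <= K * Q ^ k) -> exists g, hconv (vps e t) g.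
Proof.
  intros hQ ht he. apply (hseries_exists _ (Rabs K)). intros k. rewrite hnorm_scale, Cnorm_pow.
  eapply Rle_trans. 2: apply (geom_pow_bound K Q t k); auto.
  rewrite Rmult_comm. apply Rmult_le_compat_r; auto. apply pow_le, Cnorm_ge0.
Qed.

Lemma vps_pair {H : HilbertSpace} (e : nat -> H) t g y : hconv (vps e t) g ->
  cconv (psum (fun k => inner (e k) y) t) (inner g y).
Proof.
  intros hc. eapply cconv_ext. 2: apply (cconv_inner _ _ y hc).
  intros n. unfold vps, psum. rewrite inner_vsum_l. apply csum_ext. intros k _.
  rewrite inner_scale_l. ring.
Qed.

Lemma vsum_ext {H : HilbertSpace} n (f g : nat -> H) : (forall k, (k < n)%nat -> f k = g k) -> vsum n f = vsum n g.
Proof. induction n; simpl; intros h; auto. rewrite IHn, h; auto. Qed.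

Lemma vps_op {H : HilbertSpace} (S : H -> H) (e : nat -> H) t g : bounded_op S -> hconv (vps e t) g ->
  hconv (vps (fun k => S (e k)) t) (S g).
Proof.
  intros hS hc. eapply hconv_ext. 2: apply (hconv_op S _ _ hS hc).
  intros n. unfold vps. rewrite lin_vsum by (apply bounded_linear; auto).
  apply vsum_ext. intros k _. destruct hS as [_ [h _]]. apply h.
Qed.

Lemma vsub_add_cancel {H : HilbertSpace} (a b : H) : a = vadd (vsub a b) b.
Proof. unfold vsub. rewrite <- vadd_assoc, (vadd_comm _ (vopp b) b), vadd_opp, vadd_0. reflexivity. Qed.

Lemma eigen_family {H : HilbertSpace} (T : H -> H) l (e : nat -> H) t g : bounded_op T ->
  op_shift T l (e O) = vzero -> (forall k, op_shift T l (e (S k)) = e k) ->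
  hconv (vps e t) g -> eigenspace T (Cadd l t) g.
Proof.
  intros hT h0 hS hc. set (A := op_shift T l).
  assert (hA : bounded_op A) by (apply op_shift_bounded; auto).
  pose proof (bounded_linear A hA) as hlin.
  assert (key : forall N, A (vps e t (S N)) = vscale t (vps e t N)).
  { induction N.
    - unfold vps. simpl. rewrite vadd_0_l, (proj2 hlin). fold A in h0. rewrite h0, !vscale_vzero. reflexivity.
    - unfold vps in *. change (vsum (S (S N)) (fun k => vscale (Cpow t k) (e k))) with
        (vadd (vsum (S N) (fun k => vscale (Cpow t k) (e k))) (vscale (Cpow t (S N)) (e (S N)))).
      rewrite (proj1 hlin), IHN, (proj2 hlin). fold A in hS. rewrite hS.
      simpl. rewrite vscale_distr_v, vscale_assoc. f_equal. f_equal. ring. }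
  pose proof (hconv_shift _ _ (hconv_op A _ _ hA hc)) as h1. simpl in h1.
  pose proof (hconv_scale _ _ t hc) as h2.
  assert (hAg : A g = vscale t g).
  { apply (hconv_unique (fun n => vscale t (vps e t n))); auto.
    eapply hconv_ext. 2: exact h1. intros n. apply key. }
  unfold eigenspace. unfold A, op_shift in hAg.
  rewrite (vsub_add_cancel (T g) (vscale l g)), hAg, vscale_add_scale. f_equal. ring.
Qed.


Lemma ps_conv_eq a z0 z l : power_series_converges_to a z0 z l <-> cconv (psum a (Csub z z0)) l.
Proof.
  unfold power_series_converges_to, cconv, psum. split; intros h eps he; destruct (h eps he) as [N hN];
  exists N; intros n hn; specialize (hN n hn); rewrite Cpsum_csum in *; auto.
Qed.

Lemma psum_sub f g t N : psum (fun k => Csub (f k) (g k)) t N = Csub (psum f t N) (psum g t N).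
Proof.
  unfold psum. rewrite <- csum_sub. apply csum_ext. intros; ring.
Qed.

Lemma cconv_sub s t l l' : cconv s l -> cconv t l' -> cconv (fun n => Csub (s n) (t n)) (Csub l l').
Proof.
  intros h1 h2. apply (cconv_mul_const _ _ (Copp C1)) in h2.
  pose proof (cconv_add _ _ _ _ h1 h2) as h. eapply cconv_ext.
  2: { replace (Csub l l') with (Cadd l (Cmul (Copp C1) l')) by ring. exact h. }
  intros n. simpl. ring.
Qed.

Lemma conv_bound a b K L Q k : 0 <= Q -> (forall j, Cnorm (a j) <= K * Q ^ j) -> (forall j, Cnorm (b j) <= L * Q ^ j) ->
  Cnorm (conv a b k) <= Rabs K * Rabs L * (2 * Q) ^ k.
Proof.
  intros hQ ha hb. unfold conv. eapply Rle_trans. apply Cnorm_csum_le.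
  apply Rle_trans with (rsum (S k) (fun _ => Rabs K * Rabs L * Q ^ k)).
  - apply rsum_le. intros j hj. rewrite Cnorm_mul.
    assert (Q ^ k = Q ^ j * Q ^ (k - j)) by (rewrite <- pow_add; f_equal; lia).
    rewrite H. pose proof (ha j). pose proof (hb (k - j)%nat).
    pose proof (Cnorm_ge0 (a j)). pose proof (Cnorm_ge0 (b (k - j)%nat)).
    pose proof (Rle_abs K). pose proof (Rle_abs L). pose proof (pow_le Q j hQ). pose proof (pow_le Q (k-j) hQ).
    apply Rle_trans with ((Rabs K * Q ^ j) * (Rabs L * Q ^ (k - j))).
    apply Rmult_le_compat; auto; nra. apply Req_le; ring.
  - rewrite rsum_const. rewrite Rpow_mult_distr.
    assert (INR k + 1 <= 2 ^ k).
    { clear ha hb. induction k. simpl. lra. rewrite S_INR. change (2^(S k)) with (2 * 2^k). pose proof (pow_R1_Rle 2 k ltac:(lra)). lra. }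
    assert (0 <= Rabs K * Rabs L * Q ^ k) by (apply Rmult_le_pos; [apply Rmult_le_pos; apply Rabs_pos| apply pow_le; auto]).
    rewrite S_INR. nra.
Qed.

Lemma bound_mono c K Q Q' : 0 <= K -> 0 <= Q <= Q' -> (forall k, Cnorm (c k) <= K * Q ^ k) -> forall k, Cnorm (c k) <= K * Q' ^ k.
Proof.
  intros hK hQ h k. eapply Rle_trans. apply h. apply Rmult_le_compat_l; auto. apply pow_incr; auto.
Qed.


Lemma vsum_zero {H : HilbertSpace} n (f : nat -> H) : (forall k, (k < n)%nat -> f k = vzero) -> vsum n f = vzero.
Proof. induction n; simpl; intros h; auto. rewrite IHn, h; auto. apply vadd_0. Qed.

Lemma rsum_elem_le n f j : (forall k, 0 <= f k) -> (j < n)%nat -> f j <= rsum n f.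
Proof.
  induction n; intros h hj. lia. simpl. destruct (Nat.eq_dec j n). subst. pose proof (rsum_ge0 n f h). lra.
  pose proof (IHn h ltac:(lia)). pose proof (h n). lra.
Qed.

Lemma inner_eq_zero {H : HilbertSpace} (y : H) : inner y y = C0 -> y = vzero.
Proof. apply inner_def. Qed.


Lemma op_shift_C0 {H : HilbertSpace} (T : H -> H) v : op_shift T C0 v = T v.
Proof. unfold op_shift. rewrite vscale_C0, vsub_vzero. reflexivity. Qed.

Lemma iter_S {A} (f : A -> A) n x : Nat.iter (S n) f x = f (Nat.iter n f x).
Proof. reflexivity. Qed.

Lemma partE {H : HilbertSpace} (T Sop : H -> H) (Om : CC -> Prop) (phi : CC -> CC) r a n x :
  bounded_op T -> bounded_op Sop -> (forall y, exists v, op_shift T C0 v = y) ->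
  Copen Om -> Om C0 -> scalar_on_eigenspaces Om T Sop phi -> 0 < r ->
  (forall z, Cnorm z < r -> cconv (psum a z) (phi z)) ->
  (1 <= n)%nat -> Nat.iter n T x = vzero ->
  Sop x = vsum n (fun k => vscale (a k) (Nat.iter k T x)).
Proof.
  intros hT hS hsurj hOm hO0 hsc hr ha hn hx.
  set (A := op_shift T C0).
  assert (hA : bounded_op A) by (apply op_shift_bounded; auto).
  destruct (open_mapping A hA hsurj) as [c [hc hpre]].
  destruct (chain_exists A c hpre ltac:(lra) x) as [f [hf0 [hf1 hf2]]].
  set (m1 := (n - 1)%nat).
  set (e := fun k => if Nat.ltb k m1 then Nat.iter (m1 - k) T x else f (k - m1)%nat).
  assert (he0 : A (e O) = vzero).
  { unfold e, A. rewrite op_shift_C0. destruct (Nat.ltb_spec 0 m1).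
    - rewrite <- iter_S. replace (S (m1 - 0)) with n by (unfold m1; lia). auto.
    - replace m1 with O by lia. simpl. rewrite hf0. replace n with 1%nat in hx by (unfold m1 in *; lia). exact hx. }
  assert (he1 : forall k, A (e (S k)) = e k).
  { intros k. unfold e. destruct (Nat.ltb_spec (S k) m1); destruct (Nat.ltb_spec k m1); try lia.
    - unfold A. rewrite op_shift_C0, <- iter_S. f_equal. lia.
    - replace (S k - m1)%nat with O by lia. rewrite hf0. unfold A. rewrite op_shift_C0.
      replace (m1 - k)%nat with 1%nat by lia. reflexivity.
    - replace (S k - m1)%nat with (S (k - m1)) by lia. apply hf1. }
  set (Q := Rmax c 1).
  assert (hQ1 : 1 <= Q) by apply Rmax_r. assert (hcQ : c <= Q) by apply Rmax_l.
  set (K := rsum n (fun j => hnorm (Nat.iter j T x)) + hnorm x).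
  assert (hK : 0 <= K) by (unfold K; pose proof (hnorm_ge0 x); pose proof (rsum_ge0 n (fun j => hnorm (Nat.iter j T x)) (fun _ => hnorm_ge0 _)); lra).
  assert (heb : forall k, hnorm (e k) <= K * Q ^ k).
  { intros k. pose proof (pow_R1_Rle Q k hQ1). unfold e. destruct (Nat.ltb_spec k m1).
    - apply Rle_trans with K. 2: nra. unfold K.
      pose proof (rsum_elem_le n (fun j => hnorm (Nat.iter j T x)) (m1 - k) (fun _ => hnorm_ge0 _) ltac:(unfold m1; lia)).
      simpl in H1. pose proof (hnorm_ge0 x). lra.
    - eapply Rle_trans. apply hf2.
      apply Rle_trans with (hnorm x * Q ^ k).
      + apply Rmult_le_compat_l. apply hnorm_ge0. apply Rle_trans with (Q ^ (k - m1)).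
        apply pow_incr; lra. apply Rle_pow; auto; lia.
      + apply Rmult_le_compat_r. apply pow_le; lra. unfold K.
        pose proof (rsum_ge0 n (fun j => hnorm (Nat.iter j T x)) (fun _ => hnorm_ge0 _)). lra. }
  destruct (hOm C0 hO0) as [rho0 [hrho0 hball]].
  set (z0 := (r/2, 0) : CC).
  assert (hz0n : Cnorm z0 = r/2) by (unfold z0; rewrite Cnorm_real; apply Rabs_right; lra).
  assert (hz0 : z0 <> C0) by (unfold z0; intro ee; injection ee; lra).
  destruct (ps_coef_bound a z0 (phi z0) hz0 (ha z0 ltac:(lra))) as [Bd [hBd habd]].
  rewrite hz0n in habd.
  set (Q' := Rmax Q (/ (r/2))).
  assert (hQQ : Q <= Q') by apply Rmax_l. assert (hrQ : / (r/2) <= Q') by apply Rmax_r.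
  assert (hQ'0 : 0 <= Q') by lra.
  assert (habd' : forall k, Cnorm (a k) <= Bd * Q' ^ k).
  { apply (bound_mono _ _ (/ (r/2))); auto. split; auto. left; apply Rinv_0_lt_compat; lra. }
  assert (heb' : forall k, hnorm (e k) <= K * Q' ^ k).
  { intros k. eapply Rle_trans. apply heb. apply Rmult_le_compat_l; auto. apply pow_incr; lra. }
  destruct (bounded_pos Sop hS) as [M [hM hMb]].
  set (y := vsub (Sop x) (vsum n (fun k => vscale (a k) (Nat.iter k T x)))).
  set (ge := fun k => inner (e k) y).
  set (hs := fun k => inner (Sop (e k)) y).
  assert (hgeb : forall k, Cnorm (ge k) <= (K * hnorm y) * Q' ^ k).
  { intros k. unfold ge. eapply Rle_trans. apply cauchy_schwarz. pose proof (heb' k). pose proof (hnorm_ge0 y).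
    replace (K * hnorm y * Q' ^ k) with (K * Q'^k * hnorm y) by ring. apply Rmult_le_compat_r; auto. }
  assert (hhsb : forall k, Cnorm (hs k) <= (M * K * hnorm y) * (2 * Q') ^ k).
  { intros k. unfold hs. eapply Rle_trans. apply cauchy_schwarz. pose proof (heb' k). pose proof (hnorm_ge0 y).
    pose proof (hMb (e k)). pose proof (hnorm_ge0 (e k)).
    assert (Q' ^ k <= (2 * Q') ^ k) by (apply pow_incr; lra).
    assert (0 <= K * Q' ^ k) by (apply Rmult_le_pos; auto; apply pow_le; auto).
    apply Rle_trans with (M * (K * Q' ^ k) * hnorm y). apply Rmult_le_compat_r; auto.
    apply Rle_trans with (M * hnorm (e k)); auto. apply Rmult_le_compat_l; lra.
    replace (M * K * hnorm y * (2 * Q') ^ k) with (M * (K * (2*Q')^k) * hnorm y) by ring.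
    apply Rmult_le_compat_r; auto. apply Rmult_le_compat_l. lra. apply Rmult_le_compat_l; auto. }
  set (d := fun k => Csub (hs k) (conv a ge k)).
  assert (hdb : forall k, Cnorm (d k) <= (M * K * hnorm y + Rabs Bd * Rabs (K * hnorm y)) * (2 * Q') ^ k).
  { intros k. unfold d. unfold Csub. eapply Rle_trans. apply Cnorm_triangle. rewrite Cnorm_opp.
    pose proof (hhsb k). pose proof (conv_bound a ge Bd (K * hnorm y) Q' k hQ'0 habd' hgeb). lra. }
  set (rho := Rmin rho0 (1 / (4 * Q' + 1))).
  assert (hrho : 0 < rho) by (apply Rmin_pos; auto; apply Rdiv_lt_0_compat; lra).
  assert (hd0 : d m1 = C0).
  { apply (ps_unique m1 d _ (2 * Q') rho ltac:(lra) hrho hdb).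
    intros t htne htr. unfold rho in htr.
    assert (ht0 : Cnorm t < rho0) by (pose proof (Rmin_l rho0 (1 / (4 * Q' + 1))); lra).
    assert (htq : Cnorm t * Q' <= 1/4).
    { assert (Cnorm t < 1 / (4 * Q' + 1)) by (pose proof (Rmin_r rho0 (1 / (4 * Q' + 1))); lra).
      assert (Cnorm t * (4 * Q' + 1) < 1).
      { apply Rmult_lt_reg_r with (/(4*Q'+1)). apply Rinv_0_lt_compat; lra.
        replace (Cnorm t * (4 * Q' + 1) * / (4 * Q' + 1)) with (Cnorm t) by (field; lra). lra. }
      pose proof (Cnorm_ge0 t). nra. }
    destruct (vps_exists e K Q' t hQ'0 ltac:(lra) heb') as [g hg].
    pose proof (eigen_family T C0 e t g hT he0 he1 hg) as heig.
    replace (Cadd C0 t) with t in heig by ring.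
    assert (hOt : Om t) by (apply hball; rewrite Csub_C0; auto).
    pose proof (hsc t hOt g heig) as hSg.
    pose proof (vps_pair e t g y hg) as c1. fold ge in c1.
    pose proof (vps_pair _ t _ y (vps_op Sop e t g hS hg)) as c2. fold hs in c2.
    rewrite hSg, inner_scale_l in c2.
    assert (htr' : Cnorm t < r).
    { assert (Cnorm t * (/ (r/2)) <= 1/4).
      { apply Rle_trans with (Cnorm t * Q'); auto. apply Rmult_le_compat_l; auto. apply Cnorm_ge0. }
      assert (Cnorm t <= r / 8).
      { apply Rmult_le_reg_r with (/ (r/2)). apply Rinv_0_lt_compat; lra.
        replace (r / 8 * / (r / 2)) with (1/4) by (field; lra). lra. }
      lra. }
    pose proof (ha t htr') as c3.
    pose proof (cauchy_product a ge Bd (K * hnorm y) Q' t _ _ hQ'0 htq habd' hgeb c3 c1) as c4.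
    pose proof (cconv_sub _ _ _ _ c2 c4) as c5.
    replace (Csub (Cmul (phi t) (inner g y)) (Cmul (phi t) (inner g y))) with C0 in c5 by ring.
    eapply cconv_ext. 2: exact c5. intros N. simpl. unfold d. rewrite psum_sub. reflexivity. }
  assert (hkey : inner (Sop x) y = csum n (fun j => Cmul (a j) (inner (Nat.iter j T x) y))).
  { unfold d, hs, conv in hd0.
    assert (em1 : e m1 = x) by (unfold e; destruct (Nat.ltb_spec m1 m1); try lia; rewrite Nat.sub_diag; auto).
    rewrite em1 in hd0. replace (Datatypes.S m1) with n in hd0 by (unfold m1; lia).
    replace (inner (Sop x) y) with (Cadd (Csub (inner (Sop x) y) (csum n (fun j => Cmul (a j) (ge (m1 - j)%nat)))) (csum n (fun j => Cmul (a j) (ge (m1 - j)%nat)))) by ring.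
    rewrite hd0. replace (Cadd C0 (csum n (fun j => Cmul (a j) (ge (m1 - j)%nat)))) with
      (csum n (fun j => Cmul (a j) (ge (m1 - j)%nat))) by ring.
    apply csum_ext. intros j hj. unfold ge. f_equal. f_equal. unfold e.
    destruct (Nat.ltb_spec (m1 - j) m1).
    - f_equal. unfold m1 in *. lia.
    - assert (j = O) by (unfold m1 in *; lia). subst j. rewrite Nat.sub_0_r, Nat.sub_diag. simpl. auto. }
  apply vsub_eq0. apply inner_def. fold y.
  unfold y at 1. rewrite inner_sub_l, hkey, inner_vsum_l.
  replace (csum n (fun k => inner (vscale (a k) (Nat.iter k T x)) y)) with
    (csum n (fun j => Cmul (a j) (inner (Nat.iter j T x) y))).
  ring. apply csum_ext. intros k _. rewrite inner_scale_l. reflexivity.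
Qed.


Fixpoint bfun (g h : nat -> CC) (ig : CC) (n : nat) : nat -> CC :=
  match n with
  | O => fun _ => C0
  | S n' => fun j => if Nat.ltb j n' then bfun g h ig n' j
           else Cmul (Csub (h n') (csum n' (fun i => Cmul (bfun g h ig n' i) (g (n' - i)%nat)))) ig
  end.

Definition bseq g h ig (k : nat) : CC := bfun g h ig (S k) k.

Lemma bfun_stable g h ig n : forall j, (j < n)%nat -> bfun g h ig n j = bseq g h ig j.
Proof.
  induction n; intros j hj. lia. simpl. destruct (Nat.ltb_spec j n).
  - apply IHn; auto.
  - assert (j = n) by lia. subst. unfold bseq. simpl. rewrite Nat.ltb_irrefl. reflexivity.
Qed.

Lemma bseq_rec g h ig k : bseq g h ig k = Cmul (Csub (h k) (csum k (fun i => Cmul (bseq g h ig i) (g (k - i)%nat)))) ig.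
Proof.
  unfold bseq at 1. simpl. rewrite Nat.ltb_irrefl. f_equal. f_equal. apply csum_ext. intros i hi.
  rewrite bfun_stable; auto.
Qed.

Lemma bseq_conv g h k : g O <> C0 -> conv (bseq g h (Cinv (g O))) g k = h k.
Proof.
  intros hg. unfold conv. rewrite csum_S, Nat.sub_diag, bseq_rec.
  set (X := csum k (fun i => Cmul (bseq g h (Cinv (g O)) i) (g (k - i)%nat))).
  replace (Cadd X (Cmul (Cmul (Csub (h k) X) (Cinv (g O))) (g O))) with
    (Cadd X (Cmul (Csub (h k) X) (Cmul (g O) (Cinv (g O))))) by ring.
  rewrite Cinv_r by auto. ring.
Qed.

Lemma Cnorm_inv z : z <> C0 -> Cnorm (Cinv z) = / Cnorm z.
Proof.
  intros hz. pose proof (Cnorm_pos z hz).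
  assert (Cnorm z * Cnorm (Cinv z) = 1).
  { rewrite <- Cnorm_mul, Cinv_r by auto. unfold Cnorm, C1; simpl. replace (1*1+0*0) with 1 by ring. apply sqrt_1. }
  apply Rmult_eq_reg_l with (Cnorm z). rewrite H0. field. lra. lra.
Qed.

Lemma bseq_bound g h M G Q : 0 < G -> 0 <= M -> 0 <= Q -> Cnorm (g O) = G ->
  (forall k, Cnorm (g k) <= G * Q ^ k) -> (forall k, Cnorm (h k) <= M * G * Q ^ k) ->
  forall k, Cnorm (bseq g h (Cinv (g O)) k) <= M * (3 * Q) ^ k.
Proof.
  intros hG hM hQ hg0 hgb hhb.
  assert (hg0' : g O <> C0) by (intro e; rewrite e, Cnorm_C0 in hg0; lra).
  assert (strong : forall k, forall j, (j <= k)%nat -> Cnorm (bseq g h (Cinv (g O)) j) <= M * (3 * Q) ^ j).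
  { induction k; intros j hj.
    - assert (j = O) by lia. subst j. rewrite bseq_rec. simpl. rewrite Cnorm_mul, Cnorm_inv by auto.
      replace (Csub (h O) C0) with (h O) by ring. rewrite hg0. pose proof (hhb O). simpl in H.
      apply Rmult_le_reg_r with G; auto. replace (Cnorm (h O) * / G * G) with (Cnorm (h O)) by (field; lra). lra.
    - destruct (Nat.eq_dec j (S k)) as [ej|ej]. 2: apply IHk; lia. subst j.
      set (k1 := S k). rewrite bseq_rec, Cnorm_mul, Cnorm_inv by auto. rewrite hg0.
      assert (hsum : Cnorm (csum k1 (fun i => Cmul (bseq g h (Cinv (g O)) i) (g (k1 - i)%nat))) <=
                     M * G * Q ^ k1 * ((3 ^ k1 - 1) / 2)).
      { eapply Rle_trans. apply Cnorm_csum_le.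
        apply Rle_trans with (rsum k1 (fun i => (M * G * Q ^ k1) * 3 ^ i)).
        - apply rsum_le. intros i hi. rewrite Cnorm_mul.
          pose proof (IHk i ltac:(unfold k1 in *; lia)). pose proof (hgb (k1 - i)%nat).
          pose proof (Cnorm_ge0 (bseq g h (Cinv (g O)) i)). pose proof (Cnorm_ge0 (g (k1 - i)%nat)).
          apply Rle_trans with ((M * (3 * Q) ^ i) * (G * Q ^ (k1 - i))).
          apply Rmult_le_compat; auto.
          rewrite Rpow_mult_distr. assert (Q ^ k1 = Q ^ i * Q ^ (k1 - i)) by (rewrite <- pow_add; f_equal; lia).
          rewrite H3. apply Req_le. ring.
        - rewrite rsum_scal, rsum_geom by lra. apply Req_le. field. }
      assert (Cnorm (Csub (h k1) (csum k1 (fun i => Cmul (bseq g h (Cinv (g O)) i) (g (k1 - i)%nat)))) <=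
              M * G * Q ^ k1 * 3 ^ k1).
      { unfold Csub. eapply Rle_trans. apply Cnorm_triangle. rewrite Cnorm_opp. pose proof (hhb k1). 
        assert (M * G * Q ^ k1 + M * G * Q ^ k1 * ((3 ^ k1 - 1) / 2) <= M * G * Q ^ k1 * 3 ^ k1).
        { assert (0 <= M * G * Q ^ k1) by (apply Rmult_le_pos; [nra| apply pow_le; auto]).
          assert (1 <= 3 ^ k1) by (apply pow_R1_Rle; lra). nra. }
        lra. }
      apply Rmult_le_reg_r with G; auto.
      match goal with |- ?X * / G * G <= _ => replace (X * / G * G) with X by (field; lra) end.
      rewrite Rpow_mult_distr. replace (M * (3 ^ k1 * Q ^ k1) * G) with (M * G * Q ^ k1 * 3 ^ k1) by ring. auto. }
  intros k. apply (strong k). lia.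
Qed.

Lemma inner_self_norm {H : HilbertSpace} (x : H) : Cnorm (inner x x) = hnorm x * hnorm x.
Proof.
  rewrite inner_self_eq, Cnorm_real, hnorm_sq. apply Rabs_right. apply Rle_ge, inner_pos.
Qed.

Lemma partD {H : HilbertSpace} (T Sop : H -> H) (Om : CC -> Prop) (phi : CC -> CC) m l0 :
  (1 <= m)%nat -> bounded_op T -> bounded_op Sop ->
  (forall w, Om w -> forall y, exists x, op_shift T w x = y) ->
  (forall w, Om w -> kernel_dim T w m) -> Copen Om -> scalar_on_eigenspaces Om T Sop phi -> Om l0 ->
  exists r, 0 < r /\ exists b : nat -> CC, forall z, Cnorm (Csub z l0) < r -> power_series_converges_to b l0 z (phi z).
Proof.
  intros hm hT hS hsurj hker hOm hsc hl0.
  destruct (hker l0 hl0) as [eb [heig [hind _]]].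
  set (e0 := eb O).
  assert (he0 : eigenspace T l0 e0) by (apply heig; lia).
  assert (he0nz : e0 <> vzero).
  { intros ez. assert (C1 = C0).
    { refine (hind (fun i => if Nat.eqb i 0 then C1 else C0) _ 0%nat ltac:(lia)).
      apply vsum_zero. intros k hk. destruct (Nat.eqb_spec k 0).
      - subst k. fold e0. rewrite ez. apply vscale_vzero.
      - apply vscale_C0. }
    unfold C1, C0 in H0. injection H0. lra. }
  set (A := op_shift T l0).
  assert (hA : bounded_op A) by (apply op_shift_bounded; auto).
  destruct (open_mapping A hA (hsurj l0 hl0)) as [c [hc hpre]].
  destruct (chain_exists A c hpre ltac:(lra) e0) as [f [hf0 [hf1 hf2]]].
  assert (hAf0 : A (f O) = vzero).
  { rewrite hf0. unfold A, op_shift. rewrite he0. apply vsub_diag. }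
  set (Q := Rmax c 1).
  assert (hQ1 : 1 <= Q) by apply Rmax_r. assert (hcQ : c <= Q) by apply Rmax_l.
  set (N0 := hnorm e0).
  assert (hN0 : 0 < N0).
  { unfold N0. destruct (hnorm_ge0 e0) as [h|h]; auto. symmetry in h. apply hnorm_eq0 in h. contradiction. }
  assert (hfb : forall k, hnorm (f k) <= N0 * Q ^ k).
  { intros k. eapply Rle_trans. apply hf2. apply Rmult_le_compat_l. lra. apply pow_incr. lra. }
  destruct (bounded_pos Sop hS) as [M [hM hMb]].
  set (g := fun k => inner (f k) e0). set (h := fun k => inner (Sop (f k)) e0).
  set (G := N0 * N0).
  assert (hG : 0 < G) by (unfold G; nra).
  assert (hg0 : Cnorm (g O) = G) by (unfold g, G, N0; rewrite hf0; apply inner_self_norm).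
  assert (hg0nz : g O <> C0) by (intro ee; rewrite ee, Cnorm_C0 in hg0; lra).
  assert (hgb : forall k, Cnorm (g k) <= G * Q ^ k).
  { intros k. unfold g. eapply Rle_trans. apply cauchy_schwarz. pose proof (hfb k).
    fold N0. unfold G. replace (N0 * N0 * Q ^ k) with (N0 * Q ^ k * N0) by ring.
    apply Rmult_le_compat_r; lra. }
  assert (hhb : forall k, Cnorm (h k) <= M * G * Q ^ k).
  { intros k. unfold h. eapply Rle_trans. apply cauchy_schwarz. pose proof (hfb k). pose proof (hMb (f k)).
    pose proof (hnorm_ge0 (f k)). fold N0. unfold G.
    apply Rle_trans with (M * (N0 * Q ^ k) * N0). apply Rmult_le_compat_r. lra.
    apply Rle_trans with (M * hnorm (f k)); auto. apply Rmult_le_compat_l; lra.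
    apply Req_le. ring. }
  set (b := bseq g h (Cinv (g O))).
  pose proof (bseq_bound g h M G Q hG ltac:(lra) ltac:(lra) hg0 hgb hhb) as hbb. fold b in hbb.
  set (Q2 := 3 * Q).
  assert (hQ2 : 0 <= Q2) by (unfold Q2; lra).
  assert (hgb2 : forall k, Cnorm (g k) <= G * Q2 ^ k).
  { apply (bound_mono _ _ Q); auto; unfold Q2; lra. }
  assert (hfb2 : forall k, hnorm (f k) <= N0 * Q2 ^ k).
  { intros k. eapply Rle_trans. apply hfb. apply Rmult_le_compat_l. lra. apply pow_incr. unfold Q2; lra. }
  destruct (hOm l0 hl0) as [rho0 [hrho0 hball]].
  set (rho := Rmin rho0 (1 / (4 * Q2 + 1))).
  assert (hrho : 0 < rho) by (apply Rmin_pos; auto; apply Rdiv_lt_0_compat; lra).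
  exists rho. split; auto. exists b. intros z hz. apply ps_conv_eq.
  set (t := Csub z l0) in *.
  assert (ht0 : Cnorm t < rho0) by (pose proof (Rmin_l rho0 (1 / (4 * Q2 + 1))); unfold rho in hz; lra).
  assert (htq : Cnorm t * Q2 <= 1/4).
  { assert (Cnorm t < 1 / (4 * Q2 + 1)) by (pose proof (Rmin_r rho0 (1 / (4 * Q2 + 1))); unfold rho in hz; lra).
    assert (Cnorm t * (4 * Q2 + 1) < 1).
    { apply Rmult_lt_reg_r with (/(4*Q2+1)). apply Rinv_0_lt_compat; lra.
      replace (Cnorm t * (4 * Q2 + 1) * / (4 * Q2 + 1)) with (Cnorm t) by (field; lra). lra. }
    pose proof (Cnorm_ge0 t). nra. }
  destruct (vps_exists f N0 Q2 t hQ2 ltac:(lra) hfb2) as [gam hgam].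
  pose proof (eigen_family T l0 f t gam hT hAf0 hf1 hgam) as heig'.
  replace (Cadd l0 t) with z in heig' by (unfold t; ring).
  assert (hOz : Om z) by (apply hball; auto).
  pose proof (hsc z hOz gam heig') as hSg.
  pose proof (vps_pair f t gam e0 hgam) as c1. fold g in c1.
  pose proof (vps_pair _ t _ e0 (vps_op Sop f t gam hS hgam)) as c2. fold h in c2.
  rewrite hSg, inner_scale_l in c2.
  destruct (ps_exists b M Q2 t hQ2 ltac:(lra) hbb) as [Bt hBt].
  pose proof (cauchy_product b g M G Q2 t Bt _ hQ2 htq hbb hgb2 hBt c1) as c3.
  assert (c3' : cconv (psum h t) (Cmul Bt (inner gam e0))).
  { eapply cconv_ext. 2: exact c3. intros N. unfold psum. apply csum_ext. intros k _.
    unfold b. rewrite bseq_conv; auto. }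
  pose proof (cconv_unique _ _ _ c2 c3') as heq.
  assert (hGt : inner gam e0 <> C0).
  { intros ee. pose proof (ps_near0 g G Q2 t _ hQ2 ltac:(lra) hgb2 c1) as hn.
    rewrite ee in hn. rewrite Cnorm_sub_sym, Csub_C0, hg0, Rabs_right in hn by lra.
    pose proof (Cnorm_ge0 t). nra. }
  assert (Bt = phi z).
  { assert (Cmul (Csub Bt (phi z)) (inner gam e0) = C0).
    { replace (Cmul (Csub Bt (phi z)) (inner gam e0)) with (Csub (Cmul Bt (inner gam e0)) (Cmul (phi z) (inner gam e0))) by ring.
      rewrite heq. ring. }
    apply Cmul_eq0 in H0. destruct H0 as [h0|h0]; [|contradiction].
    replace Bt with (Cadd (Csub Bt (phi z)) (phi z)) by ring. rewrite h0. ring. }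
  subst Bt. exact hBt.
Qed.

Theorem proposition5p5 (H : HilbertSpace) (m : nat) (Om : CC -> Prop)
  (T S : H -> H) (phi : CC -> CC) :
  (1 <= m)%nat ->
  Copen Om -> Cconnected Om -> Om C0 ->
  CowenDouglas m Om T ->
  in_commutant T S ->
  scalar_on_eigenspaces Om T S phi ->
  analytic_on Om phi /\
  (forall (r : R) (a : nat -> CC), 0 < r ->
     (forall z, Cnorm z < r -> power_series_converges_to a C0 z (phi z)) ->
     forall n : nat, (1 <= n)%nat ->
     forall x : H, Nat.iter n T x = vzero ->
       S x = vsum n (fun k => vscale (a k) (Nat.iter k T x))).
Proof.
  intros hm hOm hconn hO0 [hT [hspec [hsurj [hspan hker]]]] [hS hcomm] hsc. split.
  - intros z0 hz0. apply (partD T S Om phi m z0); auto.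
  - intros r a hr ha n hn x hx.
    apply (partE T S Om phi r a n x hT hS (hsurj C0 hO0) hOm hO0 hsc hr); auto.
    intros z hz. specialize (ha z hz). apply ps_conv_eq in ha. rewrite Csub_C0 in ha. exact ha.
Qed.
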